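(* Let $A,B\in\mathbb{M}_n$ be Hermitian matrices with $\sigma(A)\cup\sigma(B)\subset\mathbb{D}$, let $f,g\in\mathfrak{H}$, and let $X\in\mathbb{M}_n$. Then $$\|f(A)X\pm Xg(B)\|_2\le\left\|\frac{X+|A|X}{d_A}+\frac{X+X|B|}{d_B}\right\|_2$$ and $$\|f(A)Xg(B)\pm X\|_2\le\left\|\frac{I+|A|}{d_A}\,X\,\frac{I+|B|}{d_B}+X\right\|_2.$$
   Context: $\mathbb{M}_n$ is the algebra of $n\times n$ complex matrices; $\|\cdot\|_2$ is the Hilbert–Schmidt (Frobenius) norm; $|T|=(T^*T)^{1/2}$. $\mathbb{D}$ is the open unit disk, $d_A=\mathrm{dist}(\partial\mathbb{D},\sigma(A))$. $\mathfrak{H}$ is the set of analytic $f:\mathbb{D}\to\mathbb{C}$ with $\operatorname{Re}f>0$ and $f(0)=1$; $f(A)$ is defined by the functional calculus (for Hermitian $A=U\operatorname{diag}(\lambda_j)U^*$, $f(A)=U\operatorname{diag}(f(\lambda_j))U^*$). *)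

(* Defs.v *)
From Stdlib Require Import Reals Lra Lia.
Open Scope R_scope.

Definition Cx : Type := (R * R)%type.
Definition Cre (z : Cx) : R := fst z.
Definition Cim (z : Cx) : R := snd z.
Definition RtoC (r : R) : Cx := (r, 0).
Definition C0 : Cx := (0, 0).
Definition C1 : Cx := (1, 0).
Definition Cadd (z w : Cx) : Cx := (Cre z + Cre w, Cim z + Cim w).
Definition Copp (z : Cx) : Cx := (- Cre z, - Cim z).
Definition Csub (z w : Cx) : Cx := Cadd z (Copp w).
Definition Cmul (z w : Cx) : Cx :=
  (Cre z * Cre w - Cim z * Cim w, Cre z * Cim w + Cim z * Cre w).
Definition Cconj (z : Cx) : Cx := (Cre z, - Cim z).
Definition Cnorm (z : Cx) : R := sqrt (Cre z ^ 2 + Cim z ^ 2).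
Fixpoint Cpow (z : Cx) (k : nat) : Cx :=
  match k with O => C1 | S k' => Cmul (Cpow z k') z end.

Fixpoint Csum (k : nat) (F : nat -> Cx) : Cx :=
  match k with O => C0 | S k' => Cadd (Csum k' F) (F k') end.
Fixpoint Rsum (k : nat) (F : nat -> R) : R :=
  match k with O => 0 | S k' => Rsum k' F + F k' end.

Definition series_conv (a : nat -> Cx) (l : Cx) : Prop :=
  forall eps, eps > 0 -> exists N : nat, forall m : nat, (N <= m)%nat ->
    Cnorm (Csub (Csum m a) l) < eps.

Definition analytic_on_disk (f : Cx -> Cx) : Prop :=
  forall z0, Cnorm z0 < 1 ->
    exists r, r > 0 /\ exists c : nat -> Cx,
      forall z, Cnorm z < 1 -> Cnorm (Csub z z0) < r ->
        series_conv (fun k => Cmul (c k) (Cpow (Csub z z0) k)) (f z).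

Definition classH (f : Cx -> Cx) : Prop :=
  analytic_on_disk f /\
  (forall z, Cnorm z < 1 -> Cre (f z) > 0) /\
  f C0 = C1.

(* ---------- n x n complex matrices (entries with indices < n matter) ---------- *)
Definition Mat : Type := nat -> nat -> Cx.
Definition mmul (n : nat) (A B : Mat) : Mat :=
  fun i j => Csum n (fun k => Cmul (A i k) (B k j)).
Definition madj (A : Mat) : Mat := fun i j => Cconj (A j i).
Definition madd (A B : Mat) : Mat := fun i j => Cadd (A i j) (B i j).
Definition msub (A B : Mat) : Mat := fun i j => Csub (A i j) (B i j).
Definition mscale (r : R) (A : Mat) : Mat := fun i j => Cmul (RtoC r) (A i j).
Definition mid : Mat := fun i j => if Nat.eqb i j then C1 else C0.
Definition mdiag (d : nat -> Cx) : Mat := fun i j => if Nat.eqb i j then d i else C0.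
Definition meq (n : nat) (A B : Mat) : Prop :=
  forall i j, (i < n)%nat -> (j < n)%nat -> A i j = B i j.

Definition hermitian (n : nat) (A : Mat) : Prop := meq n (madj A) A.
Definition unitary (n : nat) (U : Mat) : Prop :=
  meq n (mmul n (madj U) U) mid /\ meq n (mmul n U (madj U)) mid.

Definition hs_norm (n : nat) (M : Mat) : R :=
  sqrt (Rsum n (fun i => Rsum n (fun j => Cnorm (M i j) ^ 2))).

Definition fcalc (n : nat) (U : Mat) (lam : nat -> R) (h : Cx -> Cx) : Mat :=
  mmul n (mmul n U (mdiag (fun j => h (RtoC (lam j))))) (madj U).

(* |A| = (A^*A)^{1/2} for A = U diag(lam) U^*: since A^*A = U diag(lam_j^2) U^*,
   the functional calculus gives U diag(sqrt(lam_j^2)) U^*. *)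
Definition mabs (n : nat) (U : Mat) (lam : nat -> R) : Mat :=
  mmul n (mmul n U (mdiag (fun j => RtoC (sqrt (lam j ^ 2))))) (madj U).

Definition dist_circle (z : Cx) : R := 1 - Cnorm z.

(* d_A = dist(boundary D, sigma(A)) = min_j dist_circle(lam_j), sigma(A) = {lam_j : j < n}.
   (The base value 1 is an upper bound of every term, so it does not affect
   the minimum when n >= 1.) *)
Fixpoint mindist (k : nat) (lam : nat -> R) : R :=
  match k with
  | O => 1
  | S k' => Rmin (mindist k' lam) (dist_circle (RtoC (lam k')))
  end.
Definition dA (n : nat) (lam : nat -> R) : R := mindist n lam.

(* Main.v *)
From Stdlib Require Import Reals Lra Lia Psatz Classical ClassicalEpsilon FunctionalExtensionality List Setoid Morphisms.
From Coquelicot Require Import Coquelicot.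
Require Import Defs.
Open Scope R_scope.

Lemma Cmul_eq : Cmul = Cmult. Proof. reflexivity. Qed.
Lemma Cadd_eq : Cadd = Cplus. Proof. reflexivity. Qed.
Lemma Copp_eq : Defs.Copp = Complex.Copp. Proof. reflexivity. Qed.
Lemma Csub_eq : Csub = Cminus. Proof. reflexivity. Qed.
Lemma Cnorm_eq : Cnorm = Cmod. Proof. reflexivity. Qed.
Lemma Cconj_eq : Defs.Cconj = Complex.Cconj. Proof. reflexivity. Qed.
Lemma C0_eq : C0 = RtoC 0. Proof. reflexivity. Qed.
Lemma C1_eq : C1 = RtoC 1. Proof. reflexivity. Qed.
Lemma RtoC_eq : Defs.RtoC = Complex.RtoC. Proof. reflexivity. Qed.
Ltac toC := match goal with |- @eq _ ?a ?b => change (@eq C a b) end.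
Lemma Cpow_eq (z : C) k : Defs.Cpow z k = (z ^ k)%C.
Proof. induction k. reflexivity. change (Defs.Cpow z (S k)) with (Cmul (Defs.Cpow z k) z).
  rewrite IHk, Cmul_eq. toC. simpl. ring. Qed.

Ltac normC := rewrite ?Cmul_eq, ?Cadd_eq, ?Csub_eq, ?Copp_eq, ?Cnorm_eq, ?Cconj_eq, ?C0_eq, ?C1_eq, ?RtoC_eq in *.

Lemma Csum_S k (F : nat -> C) : Csum (S k) F = (Csum k F + F k)%C.
Proof. reflexivity. Qed.

Lemma Rsum_nonneg (a : nat -> R) N : (forall i, 0 <= a i) -> 0 <= Rsum N a.
Proof. intros Hp; induction N; simpl. lra. specialize (Hp N). lra. Qed.

Lemma Rsum_ge_term (a : nat -> R) N k : (forall i, 0 <= a i) -> (k < N)%nat -> a k <= Rsum N a.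
Proof.
  intros Hp Hk. induction N. lia. simpl.
  destruct (Nat.eq_dec k N). subst. pose proof (Rsum_nonneg a N Hp). lra.
  assert (k < N)%nat by lia. specialize (IHN H). specialize (Hp N). lra.
Qed.

Lemma Cmod_sub_tri (a b c : C) : Cmod (a - c) <= Cmod (a - b) + Cmod (b - c).
Proof. replace (a - c)%C with ((a - b) + (b - c))%C by ring. apply Cmod_triangle. Qed.

Lemma Cmod_sub_sym (a b : C) : Cmod (a - b) = Cmod (b - a).
Proof. replace (a - b)%C with (- (b - a))%C by ring. apply Cmod_opp. Qed.

Lemma Cmod_sub_le (x y : C) : Cmod (x - y) <= Cmod x + Cmod y.
Proof. unfold Cminus. rewrite <- (Cmod_opp y). apply Cmod_triangle. Qed.

Lemma series_terms_bounded (a : nat -> C) L : series_conv a L -> exists B, 0 <= B /\ forall k, Cmod (a k) <= B.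
Proof.
  intros H. destruct (H 1 ltac:(lra)) as [N HN].
  exists (2 + Rsum N (fun k => Cmod (a k))). split.
  pose proof (Rsum_nonneg (fun k => Cmod (a k)) N (fun i => Cmod_ge_0 _)). lra.
  intros k. destruct (Compare_dec.le_lt_dec N k).
  - pose proof (HN k l) as H1. pose proof (HN (S k) ltac:(lia)) as H2. normC.
    rewrite Csum_S in H2.
    replace (a k) with ((Csum k a + a k - L) - (Csum k a - L))%C by (toC; ring).
    pose proof (Cmod_sub_le (Csum k a + a k - L) (Csum k a - L))%C.
    pose proof (Rsum_nonneg (fun k => Cmod (a k)) N (fun i => Cmod_ge_0 _)). lra.
  - pose proof (Rsum_ge_term (fun k => Cmod (a k)) N k (fun i => Cmod_ge_0 _) l). lra.
Qed.

Lemma le_of_eps (x y : R) : (forall e, e > 0 -> x < y + e) -> x <= y.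
Proof. intros H. destruct (Rle_dec x y). auto. specialize (H ((x - y)/2) ltac:(lra)). lra. Qed.

Lemma series_lim_le (a : nat -> C) L P e : series_conv a L ->
  (exists N, forall M, (N <= M)%nat -> Cmod (Csum M a - P) <= e) -> Cmod (L - P) <= e.
Proof.
  intros H [N HN]. apply le_of_eps. intros eps Heps.
  destruct (H eps Heps) as [N1 HN1]. normC.
  specialize (HN1 (max N N1) ltac:(lia)). specialize (HN (max N N1) ltac:(lia)).
  pose proof (Cmod_sub_tri L (Csum (max N N1) a) P). rewrite Cmod_sub_sym in HN1. lra.
Qed.

Lemma PS (r : R) (F : C -> C) (c : nat -> C) : r > 0 ->
  (forall w, Cmod w < r -> series_conv (fun k => c k * w ^ k)%C (F w)) ->
  exists s B, 0 < s /\ s < r /\ 0 <= B /\ (forall k, Cmod (c k) * s ^ k <= B) /\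
    forall m w, Cmod w <= s / 2 ->
      Cmod (F w - Csum (S m) (fun k => c k * w ^ k)%C) <= 2 * B * (Cmod w / s) ^ (S m).
Proof.
  intros Hr H. set (s := r / 2).
  assert (Hs : 0 < s) by (unfold s; lra).
  destruct (series_terms_bounded _ _ (H (RtoC s) ltac:(rewrite Cmod_R, Rabs_pos_eq; unfold s; lra)))
    as [B [HB0 HB]].
  exists s, B. split; [auto|split; [unfold s; lra|split;[auto|split]]].
  { intros k. specialize (HB k). rewrite Cmod_mult, Cmod_pow, Cmod_R, Rabs_pos_eq in HB; lra. }
  intros m w Hw.
  set (q := Cmod w / s).
  assert (Hq0 : 0 <= q) by (unfold q; apply Rdiv_le_0_compat; [apply Cmod_ge_0|lra]).
  assert (Hq1 : q <= 1/2). { unfold q. apply (Rmult_le_reg_r s); [lra|]. field_simplify; lra. }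
  assert (Hterm : forall k, Cmod (c k * w ^ k) <= B * q ^ k).
  { intros k. specialize (HB k). rewrite Cmod_mult, Cmod_pow, Cmod_R, Rabs_pos_eq in HB by lra.
    rewrite Cmod_mult, Cmod_pow.
    replace (Cmod w) with (q * s) by (unfold q; field; lra).
    rewrite Rpow_mult_distr.
    pose proof (Cmod_ge_0 (c k)). pose proof (pow_le q k Hq0).
    pose proof (pow_le s k ltac:(lra)).
    replace (Cmod (c k) * (q ^ k * s ^ k)) with ((Cmod (c k) * s ^ k) * q ^ k) by ring.
    apply Rmult_le_compat_r; auto. }
  set (a := fun k => (c k * w ^ k)%C).
  assert (Htail : forall j, Cmod (Csum (S m + j) a - Csum (S m) a) <= 2 * B * (q ^ (S m) - q ^ (S m + j))).
  { induction j.
    - rewrite Nat.add_0_r. replace (Csum (S m) a - Csum (S m) a)%C with (Complex.RtoC 0) by (toC; ring). rewrite Cmod_0. lra.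
    - rewrite Nat.add_succ_r, Csum_S.
      replace (Csum (S m + j) a + a (S m + j)%nat - Csum (S m) a)%C
        with ((Csum (S m + j) a - Csum (S m) a) + a (S m + j)%nat)%C by (toC; ring).
      eapply Rle_trans. apply Cmod_triangle.
      specialize (Hterm (S m + j)%nat). change (a (S m + j)%nat) with (c (S m + j)%nat * w^(S m+j))%C.
      replace (S (S m + j)) with (S m + j + 1)%nat by lia.
      rewrite (pow_add q (S m + j) 1). replace (q ^ 1) with (q * 1) by (simpl; ring).
      pose proof (pow_le q (S m + j) Hq0).
      assert (B * q ^ (S m + j) <= 2 * B * (q ^ (S m + j) - q ^ (S m + j) * (q * 1))).
      { replace (2 * B * (q ^ (S m + j) - q ^ (S m + j) * (q * 1))) with
          (B * q ^ (S m + j) * (2 - 2 * q)) by ring.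
        rewrite <- (Rmult_1_r (B * q ^ (S m + j))) at 1.
        apply Rmult_le_compat_l. apply Rmult_le_pos; auto. lra. }
      lra. }
  apply series_lim_le with (a := a).
  - apply H. unfold s in Hw. lra.
  - exists (S m). intros M HM. replace M with (S m + (M - S m))%nat by lia.
    eapply Rle_trans. apply Htail.
    pose proof (pow_le q (S m + (M - S m)) Hq0). nra.
Qed.

Lemma de_moivre t k : (((cos t, sin t) : C) ^ k)%C = ((cos (INR k * t), sin (INR k * t)) : C).
Proof.
  induction k.
  - simpl. rewrite Rmult_0_l, cos_0, sin_0. reflexivity.
  - rewrite Cpow_S, IHk, S_INR. unfold Cmult; simpl.
    replace ((INR k + 1) * t) with (t + INR k * t) by ring.
    rewrite cos_plus, sin_plus. f_equal; ring.
Qed.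

Lemma Cmod_cs t : Cmod ((cos t, sin t) : C) = 1.
Proof. unfold Cmod; simpl. pose proof (sin2_cos2 t). unfold Rsqr in H.
  replace (cos t * (cos t * 1) + sin t * (sin t * 1)) with 1 by lra. apply sqrt_1. Qed.

Lemma dir (a : C) (n : nat) : a <> Complex.RtoC 0 -> (1 <= n)%nat ->
  exists z : C, Cmod z = 1 /\ Re (a * z ^ n)%C > 0.
Proof.
  intros Ha Hn. set (t := PI / (2 * INR n)).
  assert (HnR : INR n > 0) by (apply lt_0_INR; lia).
  assert (Hk : forall k : nat, (((cos (INR k * t), sin (INR k * t)) : C) ^ n)%C
                  = ((cos (INR k * (PI/2)), sin (INR k * (PI/2))) : C)).
  { intros k. rewrite de_moivre. replace (INR n * (INR k * t)) with (INR k * (PI / 2)).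
    reflexivity. unfold t. field. lra. }
  destruct a as [a1 a2].
  destruct (Rtotal_order a1 0) as [H1|[H1|H1]].
  - exists ((cos (INR 2 * t), sin (INR 2 * t))). split. apply Cmod_cs.
    rewrite Hk. replace (INR 2 * (PI/2)) with PI by (simpl; field). rewrite cos_PI, sin_PI.
    unfold Cmult; simpl. lra.
  - subst. assert (a2 <> 0). { intros ->. apply Ha. reflexivity. }
    destruct (Rtotal_order a2 0) as [H2|[H2|H2]]; [|lra|].
    + exists ((cos (INR 1 * t), sin (INR 1 * t))). split. apply Cmod_cs.
      rewrite Hk. replace (INR 1 * (PI/2)) with (PI/2) by (simpl; field). rewrite cos_PI2, sin_PI2.
      unfold Cmult; simpl. lra.
    + exists ((cos (INR 3 * t), sin (INR 3 * t))). split. apply Cmod_cs.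
      rewrite Hk. replace (INR 3 * (PI/2)) with (3 * (PI/2)) by (simpl; field). rewrite cos_3PI2, sin_3PI2.
      unfold Cmult; simpl. lra.
  - exists ((cos (INR 0 * t), sin (INR 0 * t))). split. apply Cmod_cs.
    rewrite Hk. replace (INR 0 * (PI/2)) with 0 by (simpl; field). rewrite cos_0, sin_0.
    unfold Cmult; simpl. lra.
Qed.

Notation CR := Complex.RtoC.

Lemma Re_add (x y : C) : Re (x + y)%C = Re x + Re y. Proof. reflexivity. Qed.
Lemma Re_scal (r : R) (x : C) : Re (CR r * x)%C = r * Re x. Proof. destruct x; unfold Cmult, Re; simpl; ring. Qed.
Lemma Re_ge (x : C) : - Cmod x <= Re x.
Proof. pose proof (re_le_Cmod x). pose proof (Rabs_le_between (Re x) (Cmod x)). unfold Rabs in *. destruct Rcase_abs; lra. Qed.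
Lemma Re_le (x : C) : Re x <= Cmod x.
Proof. pose proof (re_le_Cmod x). pose proof (Rle_abs (Re x)). lra. Qed.
Lemma Cconj_R (r : R) : Complex.Cconj (CR r) = CR r.
Proof. apply injective_projections; simpl; ring. Qed.
Lemma Cmod_nz (x : C) : x <> CR 0 -> Cmod x > 0.
Proof. intros H. apply Cmod_gt_0. exact H. Qed.

Lemma CL (g k H0 : C) (H E : C -> C) (e m : nat) (K0 r0 : R) :
  g <> CR 0 -> k <> CR 0 -> H0 <> CR 0 -> (e < m)%nat -> r0 > 0 ->
  (forall w, Cmod w < r0 -> Cmod (E w) <= K0 * Cmod w ^ (S m)) ->
  (forall eps, eps > 0 -> exists d, d > 0 /\ forall w, Cmod w < d -> Cmod (H w - H0)%C < eps) ->
  (forall w, Cmod w < r0 -> Re (Complex.Cconj (g * w ^ e * H w) * (k * w ^ m + E w))%C <= 0) -> False.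
Proof.
  intros Hg Hk HH0 Hem Hr0 HE HH Hre.
  set (a := (Complex.Cconj g * Complex.Cconj H0 * k)%C).
  assert (Ha : a <> CR 0).
  { intros Ha. assert (Cmod a = 0) by (rewrite Ha; apply Cmod_0).
    unfold a in H1. rewrite !Cmod_mult, !Cmod_conj in H1.
    pose proof (Cmod_nz _ Hg). pose proof (Cmod_nz _ Hk). pose proof (Cmod_nz _ HH0).
    assert (Cmod g * Cmod H0 * Cmod k > 0) by (repeat apply Rmult_lt_0_compat; auto). lra. }
  set (n := (m - e)%nat).
  destruct (dir a n Ha ltac:(unfold n; lia)) as [z [Hz Hd]].
  set (d := Re (a * z ^ n)%C) in *.
  set (K1 := Cmod g * Cmod k).
  assert (HK1 : 0 <= K1) by (unfold K1; apply Rmult_le_pos; apply Cmod_ge_0).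
  destruct (HH (Rmin 1 (d / (2 * (K1 + 1)))) ltac:(apply Rmin_pos; [lra| apply Rdiv_lt_0_compat; lra]))
    as [del [Hdel Hdel']].
  set (Hb := Cmod H0 + 1).
  set (K2 := Cmod g * Hb * Rabs K0 + 1).
  assert (HK2 : K2 > 0).
  { unfold K2, Hb. pose proof (Cmod_ge_0 g). pose proof (Cmod_ge_0 H0). pose proof (Rabs_pos K0).
    assert (0 <= Cmod g * (Cmod H0 + 1) * Rabs K0) by (repeat apply Rmult_le_pos; lra). lra. }
  set (t := Rmin (Rmin (r0/2) (del/2)) (d / (8 * K2))).
  assert (Ht0 : t > 0) by (unfold t; repeat apply Rmin_pos; try lra; apply Rdiv_lt_0_compat; lra).
  assert (Ht1 : t < r0) by (unfold t; pose proof (Rmin_l (Rmin (r0/2) (del/2)) (d / (8 * K2)));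
     pose proof (Rmin_l (r0/2) (del/2)); lra).
  assert (Ht2 : t < del) by (unfold t; pose proof (Rmin_l (Rmin (r0/2) (del/2)) (d / (8 * K2)));
     pose proof (Rmin_r (r0/2) (del/2)); lra).
  assert (Ht3 : t * K2 <= d / 8).
  { unfold t. pose proof (Rmin_r (Rmin (r0/2) (del/2)) (d / (8 * K2))).
    apply (Rmult_le_reg_r (/K2)). apply Rinv_0_lt_compat; lra.
    rewrite Rmult_assoc, Rinv_r by lra. replace (d / 8 * / K2) with (d / (8 * K2)) by (field; lra). lra. }
  set (w := (CR t * z)%C).
  assert (Hw : Cmod w = t) by (unfold w; rewrite Cmod_mult, Hz, Cmod_R, Rabs_pos_eq; lra).
  specialize (Hre w ltac:(lra)). specialize (HE w ltac:(lra)). specialize (Hdel' w ltac:(lra)).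
  assert (Hzz : (Complex.Cconj z * z)%C = CR 1).
  { transitivity (z * Complex.Cconj z)%C. ring. rewrite <- Cmod2_conj, Hz. apply injective_projections; simpl; ring. }
  assert (Hm : m = (e + n)%nat) by (unfold n; lia).
  set (Y := (Complex.Cconj g * Complex.Cconj (H w) * k * z ^ n)%C).
  set (Z := (Complex.Cconj (g * w ^ e * H w) * E w)%C).
  set (T := t ^ e * t ^ e * t ^ n).
  assert (HT : T > 0) by (unfold T; repeat apply Rmult_lt_0_compat; apply pow_lt; lra).
  assert (Hid : (Complex.Cconj (g * w ^ e * H w) * (k * w ^ m + E w))%C = (CR T * Y + Z)%C).
  { unfold Z, Y, T, w. rewrite Hm. rewrite !Cmult_conj, !Cpow_conj, !Cmult_conj, Cconj_R.
    rewrite !Cpow_mult_l, !Cpow_add_r, !RtoC_mult, !RtoC_pow.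
    assert (Hze : (Complex.Cconj z ^ e * z ^ e)%C = CR 1) by (rewrite <- Cpow_mult_l, Hzz; apply Cpow_1_l).
    transitivity ((Complex.Cconj g * CR t ^ e * CR t ^ e * CR t ^ n * Complex.Cconj (H (CR t * z)%C) * k * z ^ n) * (Complex.Cconj z ^ e * z ^ e)
       + Complex.Cconj g * (CR t ^ e * Complex.Cconj z ^ e) * Complex.Cconj (H (CR t * z)%C) * E (CR t * z)%C)%C.
    ring. rewrite Hze. ring. }
  rewrite Hid, Re_add, Re_scal in Hre.
  assert (HY : Re Y >= d - K1 * Cmod (H w - H0)%C).
  { replace Y with (a * z ^ n + Complex.Cconj g * Complex.Cconj (H w - H0) * k * z ^ n)%C
      by (unfold Y, a; rewrite Cminus_conj; ring).
    rewrite Re_add. fold d. pose proof (Re_ge (Complex.Cconj g * Complex.Cconj (H w - H0) * k * z ^ n)%C).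
    rewrite !Cmod_mult, Cmod_conj, Cmod_conj, Cmod_pow, Hz, pow1 in H1. unfold K1.
    replace (Cmod g * Cmod (H w - H0)%C * Cmod k * 1) with (Cmod g * Cmod k * Cmod (H w - H0)%C) in H1 by ring. lra. }
  assert (HZ : Cmod Z <= T * (t * K2)).
  { unfold Z. rewrite Cmod_mult, Cmod_conj, !Cmod_mult, Cmod_pow, Hw.
    assert (HHw : Cmod (H w) <= Hb).
    { unfold Hb. pose proof (Cmod_triangle (H w - H0) H0) as Ht.
      replace (H w - H0 + H0)%C with (H w) in Ht by ring.
      pose proof (Rmin_l 1 (d / (2 * (K1 + 1)))). lra. }
    rewrite Hm in HE. rewrite Hw in HE.
    assert (HE' : Cmod (E w) <= Rabs K0 * t ^ S (e + n)).
    { pose proof (Rle_abs K0). pose proof (pow_le t (S (e+n)) ltac:(lra)). nra. }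
    unfold T, K2. simpl pow in HE'. rewrite pow_add in HE'.
    pose proof (Cmod_ge_0 g). pose proof (Cmod_ge_0 (H w)). pose proof (Cmod_ge_0 (E w)).
    pose proof (pow_le t e ltac:(lra)). pose proof (pow_le t n ltac:(lra)). pose proof (Rabs_pos K0).
    assert (Cmod g * t ^ e * Cmod (H w) * Cmod (E w) <= Cmod g * t ^ e * Hb * (Rabs K0 * (t * (t ^ e * t ^ n)))).
    { assert (0 <= Cmod g * t ^ e) by (apply Rmult_le_pos; auto).
      apply Rmult_le_compat. apply Rmult_le_pos; auto. auto.
      apply Rmult_le_compat_l; auto. lra. }
    assert (0 <= Cmod g * Hb * Rabs K0) by (unfold Hb; pose proof (Cmod_ge_0 H0); repeat apply Rmult_le_pos; lra).
    assert (0 <= t ^ e * t ^ e * t ^ n * t) by (repeat apply Rmult_le_pos; lra).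
    replace (Cmod g * t ^ e * Hb * (Rabs K0 * (t * (t ^ e * t ^ n)))) with
      ((t ^ e * t ^ e * t ^ n * t) * (Cmod g * Hb * Rabs K0)) in H7 by ring.
    replace (t ^ e * t ^ e * t ^ n * (t * (Cmod g * Hb * Rabs K0 + 1))) with
      ((t ^ e * t ^ e * t ^ n * t) * (Cmod g * Hb * Rabs K0) + (t ^ e * t ^ e * t ^ n * t)) by ring.
    lra. }
  pose proof (Re_ge Z).
  pose proof (Rmin_r 1 (d / (2 * (K1 + 1)))).
  assert (K1 * Cmod (H w - H0)%C <= d / 2).
  { apply Rle_trans with (K1 * (d / (2 * (K1 + 1)))). apply Rmult_le_compat_l; lra.
    apply (Rmult_le_reg_r (2 * (K1 + 1))). lra. field_simplify; try lra. }
  assert (Re Y >= d / 2) by lra.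
  assert (T * Re Y >= T * (d / 2)) by (apply Rmult_ge_compat_l; lra).
  assert (T * (t * K2) <= T * (d / 8)) by (apply Rmult_le_compat_l; lra).
  nra.
Qed.

Definition ser_prop (f : C -> C) (z0 : C) (c : nat -> C) : Prop :=
  exists r, r > 0 /\ forall w, Cmod w < r -> series_conv (fun k => (c k * w ^ k)%C) (f (z0 + w)%C).
Definition ser_at (f : C -> C) (z0 : C) : nat -> C :=
  epsilon (inhabits (fun _ : nat => CR 0)) (ser_prop f z0).

Lemma ser_at_spec (f : C -> C) z0 : analytic_on_disk f -> Cmod z0 < 1 -> ser_prop f z0 (ser_at f z0).
Proof.
  intros Han Hz. unfold ser_at. apply epsilon_spec.
  destruct (Han z0 Hz) as [r [Hr [c Hc]]]. exists c.
  exists (Rmin r (1 - Cmod z0)). split. apply Rmin_pos; lra.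
  intros w Hw. pose proof (Rmin_l r (1 - Cmod z0)). pose proof (Rmin_r r (1 - Cmod z0)).
  assert (Hsub : Csub (z0 + w)%C z0 = w) by (normC; toC; ring).
  specialize (Hc (z0 + w)%C).
  rewrite Hsub in Hc. normC.
  assert (Cmod (z0 + w)%C < 1) by (pose proof (Cmod_triangle z0 w); lra).
  specialize (Hc H1 ltac:(lra)).
  replace (fun k => (c k * w ^ k)%C) with (fun k => Cmul (c k) (Defs.Cpow w k)). exact Hc.
  apply functional_extensionality. intros k. rewrite Cpow_eq. reflexivity.
Qed.

Lemma TD (f : C -> C) z0 : analytic_on_disk f -> Cmod z0 < 1 ->
  exists s B, 0 < s /\ s <= 1 - Cmod z0 /\ 0 <= B /\ (forall k, Cmod (ser_at f z0 k) * s ^ k <= B) /\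
   forall m w, Cmod w <= s/2 ->
     Cmod (f (z0 + w)%C - Csum (S m) (fun k => ser_at f z0 k * w ^ k)%C) <= 2 * B * (Cmod w / s) ^ S m.
Proof.
  intros Han Hz. destruct (ser_at_spec f z0 Han Hz) as [r [Hr Hc]].
  destruct (PS (Rmin r (1 - Cmod z0)) (fun w => f (z0 + w)%C) (ser_at f z0)) as [s [B [Hs [Hsr [HB [HB1 HB2]]]]]].
  apply Rmin_pos; lra.
  intros w Hw. apply Hc. pose proof (Rmin_l r (1 - Cmod z0)). lra.
  exists s, B. pose proof (Rmin_r r (1 - Cmod z0)). repeat split; auto; lra.
Qed.

Lemma Csum1 (F : nat -> C) : Csum 1 F = F 0%nat.
Proof. simpl. normC. toC. ring. Qed.

Lemma ser_at0 (f : C -> C) z0 : analytic_on_disk f -> Cmod z0 < 1 -> ser_at f z0 0%nat = f z0.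
Proof.
  intros Han Hz. destruct (TD f z0 Han Hz) as [s [B [Hs [_ [HB [_ H]]]]]].
  specialize (H 0%nat (CR 0) ltac:(rewrite Cmod_0; lra)).
  rewrite Csum1, Cmod_0 in H. replace (0 / s) with 0 in H by (field; lra).
  rewrite pow_i, Rmult_0_r in H by lia.
  assert (Heq : Cmod (f (z0 + CR 0)%C - (ser_at f z0 0%nat * CR 0 ^ 0)%C) = 0) by (pose proof (Cmod_ge_0 (f (z0 + CR 0)%C - (ser_at f z0 0%nat * CR 0 ^ 0)%C)); lra).
  apply Cmod_eq_0 in Heq. replace (z0 + CR 0)%C with z0 in Heq by (toC; ring).
  simpl in Heq. apply Ceq_minus in Heq. rewrite Heq. toC. ring.
Qed.

Lemma f_cont (f : C -> C) z0 : analytic_on_disk f -> Cmod z0 < 1 ->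
  forall eps, eps > 0 -> exists d, d > 0 /\ forall z, Cmod (z - z0)%C < d -> Cmod (f z - f z0)%C < eps.
Proof.
  intros Han Hz eps Heps. destruct (TD f z0 Han Hz) as [s [B [Hs [_ [HB [_ H]]]]]].
  exists (Rmin (s/2) (eps * s / (2 * B + 1))). split.
  apply Rmin_pos. lra. apply Rdiv_lt_0_compat; nra.
  intros z Hzz. pose proof (Rmin_l (s/2) (eps * s / (2 * B + 1))). pose proof (Rmin_r (s/2) (eps * s / (2 * B + 1))).
  specialize (H 0%nat (z - z0)%C ltac:(lra)).
  rewrite Csum1, (ser_at0 f z0 Han Hz) in H. replace (z0 + (z - z0))%C with z in H by (toC; ring).
  replace (f z0 * (z - z0) ^ 0)%C with (f z0) in H by (toC; change ((z - z0)^0)%C with (CR 1); ring).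
  rewrite pow_1 in H.
  assert (Hq : Cmod (z - z0)%C / s <= eps / (2 * B + 1)).
  { unfold Rdiv. apply Rle_trans with (eps * s / (2 * B + 1) * / s).
    apply Rmult_le_compat_r. apply Rlt_le, Rinv_0_lt_compat; lra. lra.
    right. field. lra. }
  assert (2 * B * (eps / (2 * B + 1)) < eps).
  { replace (2 * B * (eps / (2 * B + 1))) with (eps * (2 * B / (2 * B + 1))) by (field; lra).
    assert (2 * B / (2 * B + 1) < 1). { apply (Rmult_lt_reg_r (2*B+1)). lra. field_simplify; lra. }
    nra. }
  assert (2 * B * (Cmod (z - z0)%C / s) <= 2 * B * (eps / (2 * B + 1))) by (apply Rmult_le_compat_l; lra).
  lra.
Qed.

Definition hfun (f : C -> C) (z : C) : C :=
  if excluded_middle_informative (z = CR 0) then (ser_at f (CR 0) 1%nat / CR 2)%C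
  else ((f z - CR 1) / (z * (f z + CR 1)))%C.

Lemma hfun_0 f : hfun f (CR 0) = (ser_at f (CR 0) 1%nat / CR 2)%C.
Proof. unfold hfun. destruct excluded_middle_informative; tauto. Qed.
Lemma hfun_nz f z : z <> CR 0 -> hfun f z = ((f z - CR 1) / (z * (f z + CR 1)))%C.
Proof. unfold hfun. destruct excluded_middle_informative; tauto. Qed.

Lemma classH_pos (f : C -> C) : classH f -> forall z, Cmod z < 1 -> Re (f z) > 0.
Proof. intros [_ [H _]] z Hz. apply H. exact Hz. Qed.
Lemma classH_0 (f : C -> C) : classH f -> f (CR 0) = CR 1.
Proof. intros [_ [_ H]]. exact H. Qed.
Lemma classH_an (f : C -> C) : classH f -> analytic_on_disk f.
Proof. intros [H _]. exact H. Qed.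

Lemma fp1_nz (f : C -> C) z : classH f -> Cmod z < 1 -> (f z + CR 1)%C <> CR 0.
Proof. intros Hf Hz Heq. pose proof (classH_pos f Hf z Hz). assert (Re (f z + CR 1)%C = Re (CR 0)) by (rewrite Heq; auto).
  rewrite Re_add in H0. simpl in H0. lra. Qed.

Lemma Cmult_nz (a b : C) : a <> CR 0 -> b <> CR 0 -> (a * b)%C <> CR 0.
Proof. intros Ha Hb H. apply Cmod_nz in Ha. apply Cmod_nz in Hb. assert (Cmod (a*b)%C = 0) by (rewrite H; apply Cmod_0).
  rewrite Cmod_mult in H0. nra. Qed.

Lemma Re_neg_of_norm (a b : C) : Cmod (a + b)%C <= Cmod a -> Re (Complex.Cconj a * b)%C <= 0.
Proof.
  intros H. assert (Cmod (a + b)%C ^ 2 <= Cmod a ^ 2) by (pose proof (Cmod_ge_0 (a+b)%C); nra).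
  rewrite !Cmod2_alt in H0. destruct a as [a1 a2], b as [b1 b2]. unfold Re, Im, Cplus, Cmult, Complex.Cconj in *; simpl in *. nra.
Qed.

Lemma least_ex (P : nat -> Prop) : (exists j, P j) -> exists m, P m /\ forall j, (j < m)%nat -> ~ P j.
Proof.
  intros [j Hj]. apply NNPP. intros Hno.
  assert (forall n, forall i, (i <= n)%nat -> ~ P i).
  { induction n; intros i Hi HP.
    - apply Hno. exists i. split; auto. intros; lia.
    - apply Hno. exists i. split; auto. intros j' Hj'. apply (IHn j'). lia. }
  apply (H j j (le_n j) Hj).
Qed.

Lemma Csum_zero m (F : nat -> C) : (forall j, (j < m)%nat -> F j = CR 0) -> Csum m F = CR 0.
Proof. induction m; intros H. reflexivity. rewrite Csum_S, IHm, (H m).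
  toC; ring. lia. intros j Hj; apply H; lia. Qed.

Definition kap (g zs : C) (c : nat -> C) (j : nat) : C :=
  match j with
  | O => ((CR 1 - g * zs) * c 0%nat - (CR 1 + g * zs))%C
  | S O => ((CR 1 - g * zs) * c 1%nat - g * c 0%nat - g)%C
  | S j' => ((CR 1 - g * zs) * c j - g * c j')%C
  end.

Lemma Gid g zs c w M :
  ((CR 1 - g * (zs + w)) * Csum (S (S M)) (fun k => c k * w ^ k) - (CR 1 + g * (zs + w)))%C
  = (Csum (S (S M)) (fun j => kap g zs c j * w ^ j) - g * c (S M) * w ^ (S (S M)))%C.
Proof.
  induction M.
  - rewrite !Csum_S. change (Csum 0 ?F) with (CR 0). cbn [kap]. rewrite !Cpow_S.
    change (w ^ 0)%C with (CR 1). toC; ring.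
  - rewrite (Csum_S (S (S M)) (fun k => c k * w ^ k)%C), (Csum_S (S (S M)) (fun j => kap g zs c j * w ^ j)%C).
    transitivity (((CR 1 - g * (zs + w)) * Csum (S (S M)) (fun k => c k * w ^ k) - (CR 1 + g * (zs + w)))
       + (CR 1 - g * (zs + w)) * (c (S (S M)) * w ^ S (S M)))%C. toC; ring.
    rewrite IHM. change (kap g zs c (S (S M))) with ((CR 1 - g*zs) * c (S (S M)) - g * c (S M))%C. rewrite !Cpow_S. toC. ring.
Qed.

Lemma EST (Fw g zs w : C) (c : nat -> C) M (err : R) :
  Cmod (Fw - Csum (S (S M)) (fun k => c k * w ^ k))%C <= err ->
  Cmod (((CR 1 - g*(zs+w)) * Fw - (CR 1 + g*(zs+w))) - Csum (S (S M)) (fun j => kap g zs c j * w ^ j))%C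
    <= Cmod (CR 1 - g*(zs+w))%C * err + Cmod g * Cmod (c (S M)) * Cmod w ^ (S (S M)).
Proof.
  intros H.
  assert (Heq : (((CR 1 - g*(zs+w)) * Fw - (CR 1 + g*(zs+w))) - Csum (S (S M)) (fun j => kap g zs c j * w ^ j))%C
     = ((CR 1 - g*(zs+w)) * (Fw - Csum (S (S M)) (fun k => c k * w ^ k)) - g * c (S M) * w ^ (S (S M)))%C).
  { pose proof (Gid g zs c w M) as G.
    transitivity ((((CR 1 - g*(zs+w)) * Csum (S (S M)) (fun k => c k * w ^ k) - (CR 1 + g*(zs+w)))
       - Csum (S (S M)) (fun j => kap g zs c j * w ^ j)) + (CR 1 - g*(zs+w)) * (Fw - Csum (S (S M)) (fun k => c k * w ^ k)))%C.
    toC; ring. rewrite G. toC; ring. }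
  rewrite Heq. eapply Rle_trans. apply Cmod_sub_le.
  rewrite !Cmod_mult, Cmod_pow. apply Rplus_le_compat_r. apply Rmult_le_compat_l. apply Cmod_ge_0. exact H.
Qed.

Lemma Cmod_1mg (g zs w : C) : Cmod w <= 1 -> Cmod (CR 1 - g * (zs + w))%C <= 1 + Cmod g * (Cmod zs + 1).
Proof.
  intros Hw. eapply Rle_trans. apply Cmod_sub_le. rewrite Cmod_R, Rabs_R1, Cmod_mult.
  pose proof (Cmod_triangle zs w). pose proof (Cmod_ge_0 g).
  apply Rplus_le_compat_l. apply Rmult_le_compat_l; lra.
Qed.

Lemma LL (f : C -> C) zs g : classH f ->
  Cmod zs < 1 -> hfun f zs = g -> g <> CR 0 ->
  (exists eps, eps > 0 /\ forall z, Cmod (z - zs)%C < eps -> Cmod (hfun f z) <= Cmod g) ->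
  exists d, d > 0 /\ forall z, Cmod (z - zs)%C < d -> hfun f z = g.
Proof.
  intros Hf Hzs Hg Hg0 [eps [Heps Hle]].
  pose proof (classH_an f Hf) as Han.
  destruct (TD f zs Han Hzs) as [s [B [Hs [Hs1 [HB [HBk HT]]]]]].
  set (c := ser_at f zs) in *.
  set (K := fun w => ((CR 1 - g * (zs + w)) * f (zs + w)%C - (CR 1 + g * (zs + w)))%C).
  set (A := 1 + Cmod g * (Cmod zs + 1)).
  assert (HA : 0 <= A) by (unfold A; pose proof (Cmod_ge_0 g); pose proof (Cmod_ge_0 zs); nra).
  assert (HE : forall M w, Cmod w <= Rmin (s/2) 1 ->
     Cmod (K w - Csum (S (S M)) (fun j => kap g zs c j * w ^ j))%C
       <= A * (2 * B * (Cmod w / s) ^ S (S M)) + Cmod g * Cmod (c (S M)) * Cmod w ^ S (S M)).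
  { intros M w Hw. pose proof (Rmin_l (s/2) 1). pose proof (Rmin_r (s/2) 1).
    eapply Rle_trans. apply (EST (f (zs + w)%C) g zs w c M). apply HT. lra.
    apply Rplus_le_compat_r. apply Rmult_le_compat_r.
    pose proof (Cmod_ge_0 w). assert (0 <= Cmod w / s) by (apply Rdiv_le_0_compat; lra).
    pose proof (pow_le (Cmod w / s) (S (S M)) H2). nra.
    apply Cmod_1mg. lra. }
  assert (HKh : forall z, Cmod z < 1 -> z <> CR 0 -> K (z - zs)%C = CR 0 -> hfun f z = g).
  { intros z Hz Hz0 HK. rewrite hfun_nz by auto. unfold K in HK.
    replace (zs + (z - zs))%C with z in HK by (toC; ring).
    pose proof (fp1_nz f z Hf Hz).
    assert (Hq : (z * (f z + CR 1))%C <> CR 0) by (apply Cmult_nz; auto).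
    apply Ceq_minus in HK.
    assert (f z - CR 1 = g * (z * (f z + CR 1)))%C.
    { transitivity ((((CR 1 - g * z) * f z - (CR 1 + g * z))) + g * (z * (f z + CR 1)))%C. toC; ring.
      rewrite HK. toC; ring. }
    rewrite H0. toC. field. auto. }
  assert (HPQ : forall z, Cmod (z - zs)%C < eps -> Cmod z < 1 ->
                 Cmod (f z - CR 1)%C <= Cmod (g * (z * (f z + CR 1)))%C).
  { intros z Hz1 Hz. destruct (classic (z = CR 0)) as [->|Hz0].
    - rewrite (classH_0 f Hf). replace (CR 1 - CR 1)%C with (CR 0) by (toC; ring). rewrite Cmod_0. apply Cmod_ge_0.
    - specialize (Hle z Hz1). rewrite hfun_nz in Hle by auto.
      pose proof (fp1_nz f z Hf Hz).
      assert (Hq : (z * (f z + CR 1))%C <> CR 0) by (apply Cmult_nz; auto).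
      rewrite Cmod_div in Hle by auto. rewrite Cmod_mult.
      apply Cmod_nz in Hq. apply (Rmult_le_compat_r (Cmod (z * (f z + CR 1))%C)) in Hle; [|lra].
      unfold Rdiv in Hle. rewrite Rmult_assoc, Rinv_l, Rmult_1_r in Hle by lra. exact Hle. }
  destruct (classic (exists j, kap g zs c j <> CR 0)) as [[j Hj]|Hnone].
  -
    exfalso.
    destruct (least_ex (fun j => kap g zs c j <> CR 0) (ex_intro _ j Hj)) as [m [Hm Hmin]].
    assert (Hzero : forall j, (j < m)%nat -> kap g zs c j = CR 0) by (intros j0 Hj0; apply NNPP; apply Hmin; auto).
    assert (Hc0 : c 0%nat = f zs) by (apply ser_at0; auto).
    assert (Hk0 : kap g zs c 0%nat = CR 0).
    { cbn [kap]. rewrite Hc0. destruct (classic (zs = CR 0)) as [->|Hz0].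
      - rewrite (classH_0 f Hf). toC; ring.
      - rewrite hfun_nz in Hg by auto. pose proof (fp1_nz f zs Hf Hzs).
        assert (Hq : (zs * (f zs + CR 1))%C <> CR 0) by (apply Cmult_nz; auto).
        rewrite <- Hg. toC. field. auto. }
    assert (Hm1 : (1 <= m)%nat) by (destruct m; [contradiction|lia]).
    set (e := if excluded_middle_informative (zs = CR 0) then 1%nat else 0%nat).
    set (Hh := fun w => if excluded_middle_informative (zs = CR 0) then (f w + CR 1)%C
                         else ((zs + w) * (f (zs + w)%C + CR 1))%C).
    assert (Hem : (e < m)%nat).
    { unfold e. destruct excluded_middle_informative as [Hz0|Hz0]; [|lia].
      destruct (Nat.eq_dec m 1) as [->|]; [|lia]. exfalso. apply Hm.
      cbn [kap]. subst zs. rewrite Hc0. rewrite (classH_0 f Hf).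
      rewrite hfun_0 in Hg. unfold c. rewrite <- Hg. toC. field;
      try (intros H2; apply (f_equal fst) in H2; simpl in H2; lra). }
    set (H0 := Hh (CR 0)).
    assert (HH0 : H0 <> CR 0).
    { unfold H0, Hh. destruct excluded_middle_informative as [Hz0|Hz0].
      - apply fp1_nz; auto. rewrite Cmod_0; lra.
      - replace (zs + CR 0)%C with zs by (toC; ring). apply Cmult_nz; auto. apply fp1_nz; auto. }
    set (K0 := Cmod g * Cmod (c m) + A * (2 * B) / s ^ (S m)).
    set (r0 := Rmin (Rmin (s/2) 1) eps).
    assert (Hr0 : r0 > 0) by (unfold r0; repeat apply Rmin_pos; lra).
    assert (Hr0a : r0 <= Rmin (s/2) 1) by apply Rmin_l.
    assert (Hr0b : r0 <= eps) by apply Rmin_r.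
    pose proof (Rmin_l (s/2) 1). pose proof (Rmin_r (s/2) 1).
    apply (CL g (kap g zs c m) H0 Hh (fun w => K w - kap g zs c m * w ^ m)%C e m K0 r0); auto.
    +
      intros w Hw. destruct m as [|M]; [lia|].
      specialize (HE M w ltac:(lra)).
      rewrite Csum_S, Csum_zero in HE by (intros j0 Hj0; cbv beta; rewrite Hzero by lia; toC; ring).
      replace (K w - (CR 0 + kap g zs c (S M) * w ^ S M))%C with (K w - kap g zs c (S M) * w ^ S M)%C in HE by (toC; ring).
      eapply Rle_trans. exact HE. unfold K0.
      replace ((Cmod w / s) ^ S (S M)) with (Cmod w ^ S (S M) / s ^ S (S M)).
      2:{ unfold Rdiv. rewrite Rpow_mult_distr, pow_inv. reflexivity. }
      right. field. apply pow_nonzero. lra.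
    +
      intros ee Hee. unfold H0, Hh. destruct excluded_middle_informative as [Hz0|Hz0].
      * subst zs. destruct (f_cont f (CR 0) Han ltac:(rewrite Cmod_0; lra) ee Hee) as [d [Hd Hd']].
        exists d. split; auto. intros w Hw. replace (f w + CR 1 - (f (CR 0) + CR 1))%C with (f w - f (CR 0))%C by (toC; ring).
        apply Hd'. replace (w - CR 0)%C with w by (toC; ring). auto.
      * set (a0 := Cmod (f zs + CR 1)%C + 1).
        assert (Ha0 : a0 > 0) by (unfold a0; pose proof (Cmod_ge_0 (f zs + CR 1)%C); lra).
        set (e1 := Rmin 1 (ee / (2 * (Cmod zs + 1)))).
        assert (He1 : e1 > 0) by (unfold e1; apply Rmin_pos; [lra|]; apply Rdiv_lt_0_compat; [lra|]; pose proof (Cmod_ge_0 zs); lra).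
        destruct (f_cont f zs Han Hzs e1 He1) as [d1 [Hd1 Hd1']].
        exists (Rmin d1 (ee / (2 * (a0 + 1)))). split. apply Rmin_pos; auto. apply Rdiv_lt_0_compat; lra.
        intros w Hw. pose proof (Rmin_l d1 (ee / (2 * (a0 + 1)))) as Hw1. pose proof (Rmin_r d1 (ee / (2 * (a0 + 1)))) as Hw2.
        specialize (Hd1' (zs + w)%C). replace (zs + w - zs)%C with w in Hd1' by (toC; ring).
        specialize (Hd1' ltac:(lra)).
        replace (zs + CR 0)%C with zs by (toC; ring).
        replace ((zs + w) * (f (zs + w)%C + CR 1) - zs * (f zs + CR 1))%C with
          (w * ((f (zs + w)%C - f zs) + (f zs + CR 1)) + zs * (f (zs + w)%C - f zs))%C by (toC; ring).
        eapply Rle_lt_trans. apply Cmod_triangle. rewrite !Cmod_mult.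
        pose proof (Cmod_triangle (f (zs + w)%C - f zs) (f zs + CR 1)) as Htri.
        assert (He1a : e1 <= 1) by apply Rmin_l. assert (He1b : e1 <= ee / (2 * (Cmod zs + 1))) by apply Rmin_r.
        assert (T1 : Cmod w * Cmod (f (zs + w)%C - f zs + (f zs + CR 1))%C <= Cmod w * (a0)).
        { apply Rmult_le_compat_l. apply Cmod_ge_0. unfold a0. lra. }
        assert (T2 : Cmod w * a0 < ee / 2).
        { apply Rle_lt_trans with ((ee / (2 * (a0 + 1))) * a0). apply Rmult_le_compat_r; lra.
          apply (Rmult_lt_reg_r (2 * (a0 + 1))). lra. field_simplify; nra. }
        assert (T3 : Cmod zs * Cmod (f (zs + w)%C - f zs)%C <= Cmod zs * e1).
        { apply Rmult_le_compat_l. apply Cmod_ge_0. lra. }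
        assert (T4 : Cmod zs * e1 < ee / 2).
        { apply Rle_lt_trans with (Cmod zs * (ee / (2 * (Cmod zs + 1)))).
          apply Rmult_le_compat_l. apply Cmod_ge_0. lra.
          pose proof (Cmod_ge_0 zs). apply (Rmult_lt_reg_r (2 * (Cmod zs + 1))). lra. field_simplify; nra. }
        lra.
    +
      intros w Hw.
      assert (Hzw : Cmod (zs + w)%C < 1) by (pose proof (Cmod_triangle zs w); lra).
      assert (HQ : (g * w ^ e * Hh w)%C = (g * ((zs + w) * (f (zs + w)%C + CR 1)))%C).
      { unfold e, Hh. destruct excluded_middle_informative as [Hz0|Hz0].
        - subst zs. replace (CR 0 + w)%C with w by (toC; ring). rewrite Cpow_S. change (w ^ 0)%C with (CR 1). toC; ring.
        - change (w ^ 0)%C with (CR 1). toC; ring. }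
      rewrite HQ. replace (kap g zs c m * w ^ m + (K w - kap g zs c m * w ^ m))%C with (K w) by (toC; ring).
      apply Re_neg_of_norm.
      replace (g * ((zs + w) * (f (zs + w)%C + CR 1)) + K w)%C with (f (zs + w)%C - CR 1)%C by (unfold K; toC; ring).
      apply HPQ; auto. replace (zs + w - zs)%C with w by (toC; ring). lra.
  -
    assert (Hall : forall j, kap g zs c j = CR 0).
    { intros j0. apply NNPP. intros Hc. apply Hnone. exists j0. auto. }
    set (r1 := Rmin (s/2) 1).
    assert (HK0 : forall w, Cmod w < r1 -> K w = CR 0).
    { intros w Hw. apply NNPP. intros HKw. apply Cmod_nz in HKw.
      pose proof (Rmin_l (s/2) 1). pose proof (Rmin_r (s/2) 1). fold r1 in H, H0.
      set (q := Cmod w / s).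
      assert (Hq0 : 0 <= q) by (unfold q; apply Rdiv_le_0_compat; [apply Cmod_ge_0|lra]).
      assert (Hq1 : q <= 1/2) by (unfold q; apply (Rmult_le_reg_r s); [lra|]; field_simplify; lra).
      set (D := A * (2 * B) + Cmod g * B).
      assert (HD : 0 <= D) by (unfold D; pose proof (Cmod_ge_0 g); nra).
      assert (Hbound : forall M, Cmod (K w) <= D * q ^ S M).
      { intros M. specialize (HE M w ltac:(unfold r1 in *; lra)).
        rewrite Csum_zero in HE by (intros j0 Hj0; cbv beta; rewrite Hall; toC; ring).
        replace (K w - CR 0)%C with (K w) in HE by (toC; ring).
        eapply Rle_trans. exact HE.
        assert (Hcm : Cmod g * Cmod (c (S M)) * Cmod w ^ S (S M) <= Cmod g * B * q ^ S M).
        { assert (Hw1 : Cmod w ^ S (S M) = Cmod w * (q ^ S M * s ^ S M)).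
          { rewrite <- Rpow_mult_distr. replace (q * s) with (Cmod w) by (unfold q; field; lra). reflexivity. }
          rewrite Hw1.
          specialize (HBk (S M)). pose proof (Cmod_ge_0 g). pose proof (Cmod_ge_0 (c (S M))).
          pose proof (pow_le q (S M) Hq0). pose proof (pow_le s (S M) ltac:(lra)). pose proof (Cmod_ge_0 w).
          assert (Hw2 : Cmod w <= 1) by (unfold r1 in *; lra).
          replace (Cmod g * Cmod (c (S M)) * (Cmod w * (q ^ S M * s ^ S M))) with
            ((Cmod g * q ^ S M) * (Cmod (c (S M)) * s ^ S M) * Cmod w) by ring.
          replace (Cmod g * B * q ^ S M) with ((Cmod g * q ^ S M) * B * 1) by ring.
          assert (0 <= Cmod g * q ^ S M) by (apply Rmult_le_pos; auto).
          apply Rmult_le_compat; auto. apply Rmult_le_pos; auto. apply Rmult_le_pos; auto.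
          apply Rmult_le_compat_l; auto. }
        assert (q ^ S (S M) <= q ^ S M).
        { change (q ^ S (S M)) with (q * q ^ S M). pose proof (pow_le q (S M) Hq0).
          rewrite <- (Rmult_1_l (q ^ S M)) at 2. apply Rmult_le_compat_r; lra. }
        pose proof (pow_le q (S (S M)) Hq0).
        unfold D. fold q. assert (0 <= A * (2 * B)) by nra. assert (A * (2 * B) * q ^ S (S M) <= A * (2 * B) * q ^ S M) by (apply Rmult_le_compat_l; lra). nra. }
      destruct (pow_lt_1_zero q ltac:(rewrite Rabs_pos_eq; lra) (Cmod (K w) / (D + 1)) ltac:(apply Rdiv_lt_0_compat; lra))
        as [N HN].
      specialize (HN (S N) ltac:(lia)). rewrite Rabs_pos_eq in HN by (apply pow_le; auto).
      specialize (Hbound N).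
      assert (D * q ^ S N <= (D + 1) * q ^ S N) by (pose proof (pow_le q (S N) Hq0); nra).
      assert ((D + 1) * q ^ S N < Cmod (K w)).
      { apply (Rmult_lt_compat_l (D+1)) in HN; [|lra]. replace ((D + 1) * (Cmod (K w) / (D + 1))) with (Cmod (K w)) in HN by (field; lra). lra. }
      lra. }
    assert (Hin : forall z, Cmod (z - zs)%C < r1 -> Cmod z < 1).
    { intros z Hz. pose proof (Rmin_l (s/2) 1). pose proof (Cmod_triangle (z - zs) zs) as Ht.
      replace (z - zs + zs)%C with z in Ht by (toC; ring). unfold r1 in *. lra. }
    destruct (classic (zs = CR 0)) as [Hz0|Hz0].
    + exists r1. split. unfold r1; apply Rmin_pos; lra.
      intros z Hz. destruct (classic (z = CR 0)) as [->|Hzn].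
      * rewrite Hz0 in Hg. exact Hg.
      * apply HKh; auto.
    + exists (Rmin r1 (Cmod zs)). split. apply Rmin_pos. unfold r1; apply Rmin_pos; lra. apply Cmod_nz; auto.
      intros z Hz. pose proof (Rmin_l r1 (Cmod zs)). pose proof (Rmin_r r1 (Cmod zs)).
      destruct (classic (z = CR 0)) as [->|Hzn].
      * exfalso. replace (CR 0 - zs)%C with (- zs)%C in Hz by (toC; ring). rewrite Cmod_opp in Hz. lra.
      * apply HKh; auto. apply Hin. lra. apply HK0. lra.
Qed.

Definition ctsat (u : C -> C) (z0 : C) : Prop :=
  forall eps, eps > 0 -> exists d, d > 0 /\ forall z, Cmod (z - z0)%C < d -> Cmod (u z - u z0)%C < eps.

Lemma ct_mul u v z0 : ctsat u z0 -> ctsat v z0 -> ctsat (fun z => u z * v z)%C z0.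
Proof.
  intros Hu Hv eps Heps.
  set (a := Cmod (u z0) + 1). set (b := Cmod (v z0) + 1).
  assert (Ha : a > 0) by (unfold a; pose proof (Cmod_ge_0 (u z0)); lra).
  assert (Hb : b > 0) by (unfold b; pose proof (Cmod_ge_0 (v z0)); lra).
  destruct (Hu (Rmin 1 (eps / (2 * b))) ltac:(apply Rmin_pos; [lra|apply Rdiv_lt_0_compat; lra])) as [d1 [Hd1 Hd1']].
  destruct (Hv (Rmin 1 (eps / (2 * a))) ltac:(apply Rmin_pos; [lra|apply Rdiv_lt_0_compat; lra])) as [d2 [Hd2 Hd2']].
  exists (Rmin d1 d2). split. apply Rmin_pos; lra.
  intros z Hz. pose proof (Rmin_l d1 d2). pose proof (Rmin_r d1 d2).
  specialize (Hd1' z ltac:(lra)). specialize (Hd2' z ltac:(lra)).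
  pose proof (Rmin_l 1 (eps / (2 * b))) as E1. pose proof (Rmin_r 1 (eps / (2 * b))) as E2.
  pose proof (Rmin_l 1 (eps / (2 * a))) as E3. pose proof (Rmin_r 1 (eps / (2 * a))) as E4.
  replace (u z * v z - u z0 * v z0)%C with ((u z - u z0) * v z + u z0 * (v z - v z0))%C by (toC; ring).
  eapply Rle_lt_trans. apply Cmod_triangle. rewrite !Cmod_mult.
  assert (Hvz : Cmod (v z) <= b).
  { unfold b. pose proof (Cmod_triangle (v z - v z0) (v z0)) as T.
    replace (v z - v z0 + v z0)%C with (v z) in T by (toC; ring). lra. }
  assert (T1 : Cmod (u z - u z0)%C * Cmod (v z) <= (eps / (2 * b)) * b).
  { apply Rmult_le_compat; try apply Cmod_ge_0; lra. }
  assert (T2 : Cmod (u z0) * Cmod (v z - v z0)%C <= a * (eps / (2 * a))).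
  { assert (Cmod (u z0) <= a) by (unfold a; lra). apply Rmult_le_compat; try apply Cmod_ge_0; lra. }
  replace (eps / (2 * b) * b) with (eps / 2) in T1 by (field; lra).
  replace (a * (eps / (2 * a))) with (eps / 2) in T2 by (field; lra).
  assert (Cmod (u z0) * Cmod (v z - v z0)%C < eps / 2 \/ Cmod (u z - u z0)%C * Cmod (v z) < eps / 2).
  { destruct (Rle_lt_dec (Cmod (u z - u z0)%C) 0).
    - right. assert (Cmod (u z - u z0)%C = 0) by (pose proof (Cmod_ge_0 (u z - u z0)%C); lra).
      rewrite H1. lra.
    - right. apply Rle_lt_trans with (Cmod (u z - u z0)%C * b).
      apply Rmult_le_compat_l; lra.
      apply Rlt_le_trans with ((eps / (2 * b)) * b). apply Rmult_lt_compat_r; lra. right; field; lra. }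
  lra.
Qed.

Lemma ct_inv v z0 : ctsat v z0 -> v z0 <> CR 0 -> ctsat (fun z => / v z)%C z0.
Proof.
  intros Hv Hv0 eps Heps.
  set (m := Cmod (v z0)). assert (Hm : m > 0) by (apply Cmod_nz; auto).
  destruct (Hv (Rmin (m / 2) (eps * m * m / 2)) ltac:(apply Rmin_pos; [lra|]; apply Rdiv_lt_0_compat; [|lra]; repeat apply Rmult_lt_0_compat; lra)) as [d [Hd Hd']].
  exists d. split; auto. intros z Hz. specialize (Hd' z Hz).
  pose proof (Rmin_l (m / 2) (eps * m * m / 2)). pose proof (Rmin_r (m / 2) (eps * m * m / 2)).
  assert (Hvz : Cmod (v z) >= m / 2).
  { pose proof (Cmod_triangle (v z0 - v z) (v z)) as T.
    replace (v z0 - v z + v z)%C with (v z0) in T by (toC; ring). rewrite Cmod_sub_sym in T. fold m in T. lra. }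
  assert (Hvz0 : v z <> CR 0). { intros E. rewrite E, Cmod_0 in Hvz. lra. }
  replace (/ v z - / v z0)%C with ((v z0 - v z) / (v z * v z0))%C by (toC; field; auto).
  rewrite Cmod_div by (apply Cmult_nz; auto). rewrite Cmod_mult, Cmod_sub_sym. fold m.
  apply (Rmult_lt_reg_r (Cmod (v z) * m)). apply Rmult_lt_0_compat; lra.
  unfold Rdiv. rewrite Rmult_assoc, Rinv_l by (apply Rgt_not_eq; apply Rmult_lt_0_compat; lra).
  rewrite Rmult_1_r. apply Rlt_le_trans with (eps * m * m / 2). lra.
  assert (eps * m * (m/2) <= eps * m * Cmod (v z)) by (apply Rmult_le_compat_l; [nra|lra]). nra.
Qed.

Lemma ct_ext u v z0 d : d > 0 -> (forall z, Cmod (z - z0)%C < d -> u z = v z) -> ctsat v z0 -> ctsat u z0.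
Proof.
  intros Hd Heq Hv eps Heps. destruct (Hv eps Heps) as [d1 [Hd1 Hd1']].
  exists (Rmin d d1). split. apply Rmin_pos; lra. intros z Hz.
  pose proof (Rmin_l d d1). pose proof (Rmin_r d d1).
  rewrite (Heq z) by lra.
  rewrite (Heq z0) by (replace (z0 - z0)%C with (CR 0) by (toC; ring); rewrite Cmod_0; lra).
  apply Hd1'. lra.
Qed.

Lemma ct_f (f : C -> C) z0 : analytic_on_disk f -> Cmod z0 < 1 -> ctsat f z0.
Proof. intros. intros eps Heps. apply f_cont; auto. Qed.
Lemma ct_const (a : C) z0 : ctsat (fun _ => a) z0.
Proof. intros eps Heps. exists 1. split. lra. intros. replace (a - a)%C with (CR 0) by (toC; ring). rewrite Cmod_0. lra. Qed.
Lemma ct_id z0 : ctsat (fun z => z) z0.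
Proof. intros eps Heps. exists eps. split; auto. Qed.
Lemma ct_add u v z0 : ctsat u z0 -> ctsat v z0 -> ctsat (fun z => u z + v z)%C z0.
Proof.
  intros Hu Hv eps Heps. destruct (Hu (eps/2) ltac:(lra)) as [d1 [Hd1 Hd1']]. destruct (Hv (eps/2) ltac:(lra)) as [d2 [Hd2 Hd2']].
  exists (Rmin d1 d2). split. apply Rmin_pos; lra. intros z Hz.
  pose proof (Rmin_l d1 d2). pose proof (Rmin_r d1 d2).
  specialize (Hd1' z ltac:(lra)). specialize (Hd2' z ltac:(lra)).
  replace (u z + v z - (u z0 + v z0))%C with ((u z - u z0) + (v z - v z0))%C by (toC; ring).
  eapply Rle_lt_trans. apply Cmod_triangle. lra.
Qed.
Lemma ct_sub u v z0 : ctsat u z0 -> ctsat v z0 -> ctsat (fun z => u z - v z)%C z0.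
Proof.
  intros Hu Hv. apply (ct_add u (fun z => - v z)%C z0 Hu).
  intros eps Heps. destruct (Hv eps Heps) as [d [Hd Hd']]. exists d. split; auto. intros z Hz.
  replace (- v z - - v z0)%C with (- (v z - v z0))%C by (toC; ring). rewrite Cmod_opp. auto.
Qed.

Lemma Cmod_fp1 (f : C -> C) z : classH f -> Cmod z < 1 -> Cmod (f z + CR 1)%C >= 1.
Proof. intros Hf Hz. pose proof (classH_pos f Hf z Hz). pose proof (Re_le (f z + CR 1)%C). rewrite Re_add in H0.
  simpl in H0. lra. Qed.

Lemma h_cont (f : C -> C) z0 : classH f -> Cmod z0 < 1 -> ctsat (hfun f) z0.
Proof.
  intros Hf Hz0. pose proof (classH_an f Hf) as Han.
  destruct (classic (z0 = CR 0)) as [E0|E0].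
  - subst z0. intros eps Heps.
    destruct (TD f (CR 0) Han Hz0) as [s [B [Hs [Hs1 [HB [HBk HT]]]]]].
    set (c := ser_at f (CR 0)) in *.
    assert (Hc0 : c 0%nat = CR 1) by (unfold c; rewrite ser_at0; auto; apply (classH_0 f Hf)).
    set (k1 := Cmod (c 1%nat)).
    assert (Hk1 : 0 <= k1) by apply Cmod_ge_0.
    destruct (f_cont f (CR 0) Han Hz0 (eps / (k1 + 1)) ltac:(apply Rdiv_lt_0_compat; lra)) as [d1 [Hd1 Hd1']].
    set (d := Rmin (Rmin (s/2) d1) (eps * (s * s) / (4 * B + 1))).
    assert (Hd : d > 0) by (unfold d; repeat apply Rmin_pos; try lra; apply Rdiv_lt_0_compat; [|lra]; apply Rmult_lt_0_compat; nra).
    exists d. split; auto. intros w Hw.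
    replace (w - CR 0)%C with w in Hw by (toC; ring).
    assert (Hwa : Cmod w < s/2) by (unfold d in Hw; pose proof (Rmin_l (Rmin (s/2) d1) (eps * (s * s) / (4 * B + 1))); pose proof (Rmin_l (s/2) d1); lra).
    assert (Hwb : Cmod w < d1) by (unfold d in Hw; pose proof (Rmin_l (Rmin (s/2) d1) (eps * (s * s) / (4 * B + 1))); pose proof (Rmin_r (s/2) d1); lra).
    assert (Hwc : Cmod w < eps * (s * s) / (4 * B + 1)) by (unfold d in Hw; pose proof (Rmin_r (Rmin (s/2) d1) (eps * (s * s) / (4 * B + 1))); lra).
    destruct (classic (w = CR 0)) as [->|Hw0].
    { replace (hfun f (CR 0) - hfun f (CR 0))%C with (CR 0) by (toC; ring). rewrite Cmod_0. lra. }
    assert (Hwd : Cmod w < 1) by (rewrite Cmod_0 in Hs1; lra).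
    rewrite hfun_nz by auto. rewrite hfun_0. fold c.
    specialize (HT 1%nat w ltac:(lra)).
    replace (CR 0 + w)%C with w in HT by (toC; ring).
    rewrite !Csum_S in HT. change (Csum 0 ?F) with (CR 0) in HT. rewrite Hc0 in HT.
    set (E := (f w - CR 1 - c 1%nat * w)%C).
    replace (f w - (CR 0 + CR 1 * w ^ 0 + c 1%nat * w ^ 1))%C with E in HT by (unfold E; rewrite Cpow_1_r; change (w ^ 0)%C with (CR 1); toC; ring).
    pose proof (fp1_nz f w Hf Hwd) as Hfp. pose proof (Cmod_fp1 f w Hf Hwd) as Hfm.
    assert (Hwn : Cmod w > 0) by (apply Cmod_nz; auto).
    assert (Hid : ((f w - CR 1) / (w * (f w + CR 1)) - c 1%nat / CR 2)%C =
                  ((c 1%nat * w * (CR 1 - f w) + CR 2 * E) / (CR 2 * w * (f w + CR 1)))%C).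
    { unfold E. toC. field. split; auto. }
    rewrite Hid. rewrite Cmod_div.
    2:{ apply Cmult_nz; auto. apply Cmult_nz; auto. intros H2. apply (f_equal fst) in H2. simpl in H2. lra. }
    rewrite !Cmod_mult, Cmod_R, Rabs_pos_eq by lra.
    specialize (Hd1' w ltac:(replace (w - CR 0)%C with w by (toC; ring); lra)).
    rewrite (classH_0 f Hf) in Hd1'.
    pose proof (Cmod_triangle (c 1%nat * w * (CR 1 - f w))%C (CR 2 * E)%C) as T.
    rewrite !Cmod_mult, Cmod_R, Rabs_pos_eq in T by lra. rewrite Cmod_sub_sym in T. fold k1 in T.
    assert (HEb : Cmod E <= 2 * B * (Cmod w * Cmod w) / (s * s)).
    { eapply Rle_trans. exact HT. right. simpl. field. lra. }
    apply Rle_lt_trans with ((k1 * Cmod w * Cmod (f w - CR 1)%C + 2 * Cmod E) / (2 * Cmod w)).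
    { unfold Rdiv. apply Rmult_le_compat.
      - apply Cmod_ge_0.
      - apply Rlt_le, Rinv_0_lt_compat. apply Rmult_lt_0_compat; [|lra]. lra.
      - exact T.
      - apply Rinv_le_contravar. lra. nra. }
    replace ((k1 * Cmod w * Cmod (f w - CR 1)%C + 2 * Cmod E) / (2 * Cmod w))
      with (k1 * Cmod (f w - CR 1)%C / 2 + Cmod E / Cmod w) by (field; lra).
    assert (T1 : k1 * Cmod (f w - CR 1)%C / 2 < eps / 2).
    { assert (k1 * Cmod (f w - CR 1)%C <= k1 * (eps / (k1 + 1))) by (apply Rmult_le_compat_l; lra).
      assert (k1 * (eps / (k1 + 1)) < eps).
      { replace (k1 * (eps / (k1 + 1))) with (eps * (k1 / (k1 + 1))) by (field; lra).
        assert (k1 / (k1 + 1) < 1) by (apply (Rmult_lt_reg_r (k1 + 1)); [lra|]; field_simplify; lra). nra. }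
      lra. }
    assert (T2 : Cmod E / Cmod w < eps / 2).
    { apply Rle_lt_trans with (2 * B * Cmod w / (s * s)).
      { apply (Rmult_le_reg_r (Cmod w)). lra. replace (Cmod E / Cmod w * Cmod w) with (Cmod E) by (field; lra).
        replace (2 * B * Cmod w / (s * s) * Cmod w) with (2 * B * (Cmod w * Cmod w) / (s * s)) by (field; lra). exact HEb. }
      apply Rle_lt_trans with (2 * B * (eps * (s * s) / (4 * B + 1)) / (s * s)).
      { unfold Rdiv. apply Rmult_le_compat_r. apply Rlt_le, Rinv_0_lt_compat; nra. apply Rmult_le_compat_l; lra. }
      replace (2 * B * (eps * (s * s) / (4 * B + 1)) / (s * s)) with (eps * (2 * B / (4 * B + 1))) by (field; split; nra).
      assert (2 * B / (4 * B + 1) < 1/2) by (apply (Rmult_lt_reg_r (4 * B + 1)); [lra|]; field_simplify; lra). nra. }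
    lra.
  - apply (ct_ext (hfun f) (fun z => (f z - CR 1) * / (z * (f z + CR 1)))%C z0 (Rmin (Cmod z0) (1 - Cmod z0))).
    + apply Rmin_pos. apply Cmod_nz; auto. lra.
    + intros z Hz. pose proof (Rmin_l (Cmod z0) (1 - Cmod z0)).
      rewrite hfun_nz. reflexivity. intros ->. replace (CR 0 - z0)%C with (- z0)%C in Hz by (toC; ring).
      rewrite Cmod_opp in Hz. lra.
    + apply (ct_mul (fun z => f z - CR 1)%C (fun z => / (z * (f z + CR 1)))%C).
      * apply (ct_sub f (fun _ => CR 1)). apply ct_f; auto. apply ct_const.
      * apply (ct_inv (fun z => z * (f z + CR 1))%C).
        apply (ct_mul (fun z => z) (fun z => f z + CR 1)%C). apply ct_id.
        apply (ct_add f (fun _ => CR 1)). apply ct_f; auto. apply ct_const.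
        apply Cmult_nz; auto. apply fp1_nz; auto.
Qed.

Definition toT (z : C) : Compactness.Tn 2 R := (fst z, (snd z, tt)).
Definition ofT (x : Compactness.Tn 2 R) : C := (fst x, fst (snd x)).

Lemma Cmod_le_sum (z : C) : Cmod z <= Rabs (fst z) + Rabs (snd z).
Proof.
  destruct z as [x y]. unfold Cmod; cbn [fst snd].
  rewrite <- (sqrt_pow2 (Rabs x + Rabs y)) by (pose proof (Rabs_pos x); pose proof (Rabs_pos y); lra).
  apply sqrt_le_1_alt. rewrite <- (pow2_abs x), <- (pow2_abs y).
  pose proof (Rabs_pos x); pose proof (Rabs_pos y). simpl. nra.
Qed.

Lemma fst_le (z : C) : Rabs (fst z) <= Cmod z.
Proof. pose proof (Rmax_Cmod z). pose proof (Rmax_l (Rabs (fst z)) (Rabs (snd z))). lra. Qed.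
Lemma snd_le (z : C) : Rabs (snd z) <= Cmod z.
Proof. pose proof (Rmax_Cmod z). pose proof (Rmax_r (Rabs (fst z)) (Rabs (snd z))). lra. Qed.

Lemma COVER (rho : R) (del : C -> R) : 0 < rho -> (forall z, Cmod z <= rho -> del z > 0) ->
  exists l : list C, (forall t, In t l -> Cmod t <= rho) /\
    forall z, Cmod z <= rho -> exists t, In t l /\ Cmod (z - t)%C < del t.
Proof.
  intros Hrho Hdel.
  set (dlf := fun x : Compactness.Tn 2 R => if Rle_dec (Cmod (ofT x)) rho then del (ofT x) / 2 else (Cmod (ofT x) - rho) / 2).
  assert (Hpos : forall x, 0 < dlf x).
  { intros x. unfold dlf. destruct Rle_dec. specialize (Hdel _ r). lra. lra. }
  pose (dl := fun x => mkposreal (dlf x) (Hpos x)).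
  pose proof (compactness_list 2 (-rho, (-rho, tt)) (rho, (rho, tt)) dl) as Hc.
  apply NNPP in Hc. destruct Hc as [l Hl].
  exists (filter (fun t => if Rle_dec (Cmod t) rho then true else false) (map ofT l)). split.
  - intros t Ht. apply filter_In in Ht. destruct Ht as [_ Ht]. destruct Rle_dec; [auto|discriminate].
  - intros z Hz. destruct (Hl (toT z)) as [t [Ht [_ Hcl]]].
    { pose proof (fst_le z). pose proof (snd_le z). unfold toT. simpl.
      apply Rabs_le_between in H || idtac. unfold Rabs in *. destruct (Rcase_abs (fst z)), (Rcase_abs (snd z)); repeat split; lra. }
    destruct t as [t1 [t2 []]]. simpl in Hcl. destruct Hcl as [H1 [H2 _]].
    set (u := ofT (t1, (t2, tt))).
    assert (Hzu : Cmod (z - u)%C < 2 * dlf (t1, (t2, tt))).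
    { pose proof (Cmod_le_sum (z - u)%C) as Hs.
      replace (fst (z - u)%C) with (fst z - t1) in Hs by (unfold u, ofT; simpl; ring).
      replace (snd (z - u)%C) with (snd z - t2) in Hs by (unfold u, ofT; simpl; ring).
      simpl in H1, H2. lra. }
    unfold dlf in Hzu. fold u in Hzu. destruct Rle_dec as [Hu|Hu].
    + exists u. split. apply filter_In. split. apply in_map. auto. destruct Rle_dec; tauto. lra.
    + exfalso. pose proof (Cmod_triangle (u - z) z). replace (u - z + z)%C with u in H by (toC; ring).
      rewrite Cmod_sub_sym in H. lra.
Qed.

Lemma fold_max_ge (phi : C -> R) b l t : In t l -> phi t <= fold_right (fun t acc => Rmax (phi t) acc) b l.
Proof. induction l; simpl; intros H. contradiction. destruct H as [->|H]. apply Rmax_l.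
  eapply Rle_trans. apply IHl; auto. apply Rmax_r. Qed.
Lemma fold_max_lt (phi : C -> R) b l M : b < M -> (forall t, In t l -> phi t < M) -> fold_right (fun t acc => Rmax (phi t) acc) b l < M.
Proof. induction l; simpl; intros Hb H. auto. apply Rmax_lub_lt. apply H; auto. apply IHl; auto. Qed.

Lemma EVT (g : C -> R) (rho : R) : 0 < rho ->
  (forall z, Cmod z <= rho -> forall eps, eps > 0 -> exists d, d > 0 /\ forall w, Cmod (w - z)%C < d -> Rabs (g w - g z) < eps) ->
  exists zs, Cmod zs <= rho /\ forall z, Cmod z <= rho -> g z <= g zs.
Proof.
  intros Hrho Hc.
  set (dd := fun (eps : C -> R) z => epsilon (inhabits 1) (fun d => d > 0 /\ forall w, Cmod (w - z)%C < d -> Rabs (g w - g z) < eps z)).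
  assert (Hdd : forall eps z, Cmod z <= rho -> eps z > 0 -> dd eps z > 0 /\ forall w, Cmod (w - z)%C < dd eps z -> Rabs (g w - g z) < eps z).
  { intros eps z Hz He. unfold dd. apply epsilon_spec. apply Hc; auto. }
  destruct (COVER rho (dd (fun _ => 1)) Hrho) as [l1 [Hl1 Hl1']].
  { intros z Hz. apply Hdd; auto; lra. }
  set (E := fun y => exists z, Cmod z <= rho /\ y = g z).
  assert (HEb : bound E).
  { exists (fold_right (fun t acc => Rmax (g t) acc) (g (CR 0)) l1 + 1). intros y [z [Hz ->]].
    destruct (Hl1' z Hz) as [t [Ht Hzt]]. destruct (Hdd (fun _ => 1) t (Hl1 t Ht) ltac:(lra)) as [_ Hd].
    specialize (Hd z Hzt). pose proof (fold_max_ge g (g (CR 0)) l1 t Ht).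
    pose proof (Rle_abs (g z - g t)). lra. }
  assert (HEn : exists y, E y) by (exists (g (CR 0)); exists (CR 0); split; [rewrite Cmod_0; lra|auto]).
  destruct (completeness E HEb HEn) as [M [HMub HMl]].
  destruct (classic (exists zs, Cmod zs <= rho /\ g zs = M)) as [[zs [Hzs HzM]]|Hno].
  - exists zs. split; auto. intros z Hz. rewrite HzM. apply HMub. exists z. auto.
  - exfalso.
    assert (Hlt : forall z, Cmod z <= rho -> g z < M).
    { intros z Hz. assert (g z <= M) by (apply HMub; exists z; auto).
      destruct (Req_dec (g z) M). exfalso. apply Hno. exists z. auto. lra. }
    set (eps2 := fun z => (M - g z) / 2).
    destruct (COVER rho (dd eps2) Hrho) as [l2 [Hl2 Hl2']].
    { intros z Hz. apply Hdd; auto. unfold eps2. specialize (Hlt z Hz). lra. }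
    set (L := fold_right (fun t acc => Rmax ((M + g t) / 2) acc) ((M + g (CR 0)) / 2) l2).
    assert (HL : L < M).
    { unfold L. apply fold_max_lt. pose proof (Hlt (CR 0) ltac:(rewrite Cmod_0; lra)). lra.
      intros t Ht. pose proof (Hlt t (Hl2 t Ht)). lra. }
    assert (M <= L).
    { apply HMl. intros y [z [Hz ->]].
      destruct (Hl2' z Hz) as [t [Ht Hzt]]. destruct (Hdd eps2 t (Hl2 t Ht)) as [_ Hd].
      unfold eps2. pose proof (Hlt t (Hl2 t Ht)). lra.
      specialize (Hd z Hzt). unfold eps2 in Hd.
      pose proof (fold_max_ge (fun t => (M + g t) / 2) ((M + g (CR 0)) / 2) l2 t Ht) as HF. fold L in HF.
      cbv beta in HF. pose proof (Rle_abs (g z - g t)). unfold L. lra. }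
    lra.
Qed.

Lemma Cmod_rev (a b : C) : Rabs (Cmod a - Cmod b) <= Cmod (a - b)%C.
Proof.
  pose proof (Cmod_triangle (a - b) b). replace (a - b + b)%C with a in H by (toC; ring).
  pose proof (Cmod_triangle (b - a) a). replace (b - a + a)%C with b in H0 by (toC; ring).
  rewrite Cmod_sub_sym in H0. unfold Rabs. destruct Rcase_abs; lra.
Qed.

Lemma fm1_lt (f : C -> C) z : classH f -> Cmod z < 1 -> Cmod (f z - CR 1)%C < Cmod (f z + CR 1)%C.
Proof.
  intros Hf Hz. pose proof (classH_pos f Hf z Hz). destruct (f z) as [x y]. unfold Re in H; simpl in H.
  unfold Cmod. apply sqrt_lt_1_alt. split.
  - simpl. pose proof (pow2_ge_0 (x + - (1))). pose proof (pow2_ge_0 (y + - 0)). simpl in *. lra.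
  - simpl. lra.
Qed.

Lemma h_lt (f : C -> C) z : classH f -> Cmod z < 1 -> z <> CR 0 -> Cmod (hfun f z) < 1 / Cmod z.
Proof.
  intros Hf Hz Hz0. rewrite hfun_nz by auto. pose proof (fp1_nz f z Hf Hz).
  rewrite Cmod_div by (apply Cmult_nz; auto). rewrite Cmod_mult.
  pose proof (fm1_lt f z Hf Hz). apply Cmod_nz in Hz0. apply Cmod_nz in H.
  apply (Rmult_lt_reg_r (Cmod z * Cmod (f z + CR 1)%C)). nra.
  field_simplify; try lra. 
Qed.

Definition sig (zs : C) (rho t : R) : C := (zs + CR t * (CR rho - zs))%C.

Lemma sig_diff zs rho t s : Cmod (sig zs rho t - sig zs rho s)%C = Rabs (t - s) * Cmod (CR rho - zs)%C.
Proof. unfold sig. replace (zs + CR t * (CR rho - zs) - (zs + CR s * (CR rho - zs)))%C with (CR (t - s) * (CR rho - zs))%C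
  by (rewrite RtoC_minus; toC; ring). rewrite Cmod_mult, Cmod_R. reflexivity. Qed.

Lemma sig_norm zs rho t : 0 <= t <= 1 -> 0 <= rho -> Cmod (sig zs rho t) <= (1 - t) * Cmod zs + t * rho.
Proof. intros Ht Hr. unfold sig. replace (zs + CR t * (CR rho - zs))%C with (CR (1 - t) * zs + CR (t * rho))%C
  by (rewrite RtoC_minus, RtoC_mult; toC; ring).
  eapply Rle_trans. apply Cmod_triangle. rewrite Cmod_mult, !Cmod_R, !Rabs_pos_eq; try lra. apply Rmult_le_pos; lra. Qed.

Lemma GC (f : C -> C) rho : classH f -> 0 < rho < 1 -> forall z, Cmod z <= rho -> Cmod (hfun f z) <= 1 / rho.
Proof.
  intros Hf Hrho.
  destruct (EVT (fun z => Cmod (hfun f z)) rho ltac:(lra)) as [zs [Hzs Hmax]].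
  { intros z Hz eps Heps. destruct (h_cont f z Hf ltac:(lra) eps Heps) as [d [Hd Hd']].
    exists d. split; auto. intros w Hw. eapply Rle_lt_trans. apply Cmod_rev. auto. }
  set (gam := hfun f zs).
  assert (Hrho_bd : Cmod (hfun f (CR rho)) < 1 / rho).
  { pose proof (h_lt f (CR rho) Hf). rewrite Cmod_R, Rabs_pos_eq in H by lra. apply H. lra.
    intros E. apply (f_equal fst) in E. simpl in E. lra. }
  assert (Hfinal : Cmod gam <= 1 / rho).
  { destruct (Req_dec (Cmod zs) rho) as [Heq|Hne].
    - assert (zs <> CR 0) by (intros E; rewrite E, Cmod_0 in Heq; lra).
      pose proof (h_lt f zs Hf ltac:(lra) H). rewrite Heq in H0. unfold gam. lra.
    - destruct (classic (gam = CR 0)) as [Hg0|Hg0].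
      { rewrite Hg0, Cmod_0. apply Rlt_le, Rdiv_lt_0_compat; lra. }
      assert (Hzs' : Cmod zs < rho) by lra.
      set (S := fun t => 0 <= t <= 1 /\ forall s, 0 <= s <= t -> hfun f (sig zs rho s) = gam).
      assert (HS0 : S 0).
      { split. lra. intros s Hs. replace s with 0 by lra. unfold sig. replace (zs + CR 0 * (CR rho - zs))%C with zs by (toC; ring). reflexivity. }
      assert (HSb : bound S) by (exists 1; intros t [Ht _]; lra).
      destruct (completeness S HSb (ex_intro _ 0 HS0)) as [tau [Htub Htl]].
      assert (Htau0 : 0 <= tau) by (apply Htub; auto).
      assert (Htau1 : tau <= 1) by (apply Htl; intros t [Ht _]; lra).
      assert (Ha : forall s, 0 <= s < tau -> hfun f (sig zs rho s) = gam).
      { intros s Hs. apply NNPP. intros Hn. assert (tau <= s); [|lra]. apply Htl. intros t [Ht Ht']. 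
        apply Rnot_lt_le. intros Hst. apply Hn. apply Ht'. lra. }
      set (Lr := Cmod (CR rho - zs)%C + 1).
      assert (HLr : Lr > 0) by (unfold Lr; pose proof (Cmod_ge_0 (CR rho - zs)%C); lra).
      assert (Hsig_in : forall t, 0 <= t <= 1 -> Cmod (sig zs rho t) <= rho).
      { intros t Ht. eapply Rle_trans. apply sig_norm; lra. nra. }
      assert (Hb : hfun f (sig zs rho tau) = gam).
      { destruct (Req_dec tau 0) as [Ht0|Ht0].
        { rewrite Ht0. unfold sig. replace (zs + CR 0 * (CR rho - zs))%C with zs by (toC; ring). reflexivity. }
        apply NNPP. intros Hn.
        assert (Heta : Cmod (hfun f (sig zs rho tau) - gam)%C > 0).
        { apply Cmod_nz. intros E. apply Hn. apply Ceq_minus. exact E. }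
        destruct (h_cont f (sig zs rho tau) Hf ltac:(pose proof (Hsig_in tau ltac:(lra)); lra) _ Heta) as [d [Hd Hd']].
        set (s := Rmax 0 (tau - d / (2 * Lr))).
        assert (Hs1 : 0 <= s) by apply Rmax_l.
        assert (Hs2 : s < tau).
        { unfold s. apply Rmax_lub_lt. lra. assert (d / (2 * Lr) > 0) by (apply Rdiv_lt_0_compat; lra). lra. }
        assert (Hs3 : tau - s <= d / (2 * Lr)) by (unfold s; pose proof (Rmax_r 0 (tau - d / (2 * Lr))); lra).
        specialize (Hd' (sig zs rho s)).
        rewrite (Ha s ltac:(lra)) in Hd'.
        assert (Hsym : Cmod (gam - hfun f (sig zs rho tau))%C = Cmod (hfun f (sig zs rho tau) - gam)%C) by apply Cmod_sub_sym.
        assert (Cmod (sig zs rho s - sig zs rho tau)%C < d).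
        { rewrite sig_diff. rewrite Rabs_minus_sym, Rabs_pos_eq by lra.
          apply Rle_lt_trans with (d / (2 * Lr) * Lr). apply Rmult_le_compat; try lra. apply Cmod_ge_0.
          unfold Lr; lra. replace (d / (2 * Lr) * Lr) with (d / 2) by (field; lra). lra. }
        specialize (Hd' H). lra. }
      assert (Htau : tau = 1).
      { destruct (Req_dec tau 1); auto. exfalso.
        assert (Hin : Cmod (sig zs rho tau) < rho).
        { eapply Rle_lt_trans. apply sig_norm; lra. nra. }
        destruct (LL f (sig zs rho tau) gam Hf ltac:(lra) Hb Hg0) as [d [Hd Hd']].
        { exists (rho - Cmod (sig zs rho tau)). split. lra. intros z Hz.
          apply Hmax. pose proof (Cmod_triangle (z - sig zs rho tau) (sig zs rho tau)) as T.
          replace (z - sig zs rho tau + sig zs rho tau)%C with z in T by (toC; ring). lra. }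
        set (t' := Rmin 1 (tau + d / (2 * Lr))).
        assert (Ht'1 : tau < t').
        { unfold t'. apply Rmin_glb_lt. lra. assert (d / (2 * Lr) > 0) by (apply Rdiv_lt_0_compat; lra). lra. }
        assert (HSt' : S t').
        { split. split; [lra | unfold t'; apply Rmin_l].
          intros s Hs. destruct (Rlt_le_dec s tau) as [Hst|Hst]. apply Ha; lra.
          apply Hd'. rewrite sig_diff, Rabs_pos_eq by lra.
          pose proof (Rmin_r 1 (tau + d / (2 * Lr))). fold t' in H0.
          apply Rle_lt_trans with (d / (2 * Lr) * Lr). apply Rmult_le_compat; try lra. apply Cmod_ge_0.
          unfold Lr; lra. replace (d / (2 * Lr) * Lr) with (d / 2) by (field; lra). lra. }
        pose proof (Htub t' HSt'). lra. }
      rewrite Htau in Hb. unfold sig in Hb. replace (zs + CR 1 * (CR rho - zs))%C with (CR rho) in Hb by (toC; ring).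
      rewrite <- Hb. lra. }
  intros z Hz. eapply Rle_trans. apply Hmax. auto. exact Hfinal.
Qed.

Lemma schwarz (f : C -> C) z : classH f -> Cmod z < 1 -> Cmod (f z - CR 1)%C <= Cmod z * Cmod (f z + CR 1)%C.
Proof.
  intros Hf Hz. destruct (classic (z = CR 0)) as [->|Hz0].
  { rewrite (classH_0 f Hf). replace (CR 1 - CR 1)%C with (CR 0) by (toC; ring). rewrite Cmod_0.
    rewrite Rmult_0_l. lra. }
  set (a := Cmod (f z - CR 1)%C). set (b := Cmod z * Cmod (f z + CR 1)%C).
  pose proof (fp1_nz f z Hf Hz) as Hp. apply Cmod_nz in Hp. pose proof (Cmod_nz _ Hz0) as Hzp.
  destruct (Rle_dec a b) as [|Hab]; auto. exfalso.
  assert (Hb : b > 0) by (unfold b; nra).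
  set (m := Rmax (Cmod z) (b / a)).
  assert (Ha : a > 0) by lra.
  assert (Hm1 : m < 1). { unfold m. apply Rmax_lub_lt. lra. apply (Rmult_lt_reg_r a). lra. field_simplify; lra. }
  set (rho := m + (1 - m) / 2).
  assert (Hr1 : Cmod z < rho) by (unfold rho; pose proof (Rmax_l (Cmod z) (b / a)); fold m in H; lra).
  assert (Hr2 : b / a < rho) by (unfold rho; pose proof (Rmax_r (Cmod z) (b / a)); fold m in H; lra).
  assert (Hr3 : rho < 1) by (unfold rho; lra).
  pose proof (GC f rho Hf ltac:(split; lra) z ltac:(lra)) as HG.
  rewrite hfun_nz in HG by auto. rewrite Cmod_div in HG by (apply Cmult_nz; auto; apply fp1_nz; auto).
  rewrite Cmod_mult in HG. fold a in HG. fold b in HG.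
  assert (a <= b / rho).
  { apply (Rmult_le_reg_r (/ b)). apply Rinv_0_lt_compat; lra.
    replace (b / rho * / b) with (1 / rho) by (field; lra). replace (a * / b) with (a / b) by reflexivity. lra. }
  assert (a * rho <= b) by (apply (Rmult_le_reg_r (/ rho)); [apply Rinv_0_lt_compat; lra|]; replace (a * rho * / rho) with a by (field; lra); exact H).
  assert (b < a * rho) by (apply (Rmult_lt_reg_r (/ a)); [apply Rinv_0_lt_compat; lra|]; replace (a * rho * / a) with rho by (field; lra); exact Hr2).
  lra.
Qed.

Lemma fbound (f : C -> C) z : classH f -> Cmod z < 1 -> Cmod (f z) <= (1 + Cmod z) / (1 - Cmod z).
Proof.
  intros Hf Hz. pose proof (schwarz f z Hf Hz).
  pose proof (Cmod_triangle (f z - CR 1) (CR 1)). replace (f z - CR 1 + CR 1)%C with (f z) in H0 by (toC; ring).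
  pose proof (Cmod_triangle (f z) (CR 1)). rewrite Cmod_R, Rabs_R1 in H0, H1.
  pose proof (Cmod_ge_0 z).
  apply (Rmult_le_reg_r (1 - Cmod z)). lra. field_simplify; try lra.
  assert (Cmod z * Cmod (f z + CR 1)%C <= Cmod z * (Cmod (f z) + 1)) by (apply Rmult_le_compat_l; lra).
  nra.
Qed.


Lemma Csum_ext' n (F G : nat -> C) : (forall k, (k < n)%nat -> F k = G k) -> Csum n F = Csum n G.
Proof. intros H. induction n. reflexivity. rewrite !Csum_S. rewrite IHn. rewrite (H n). reflexivity. lia. intros; apply H; lia. Qed.

Lemma Csum_add n (F G : nat -> C) : Csum n (fun k => F k + G k)%C = (Csum n F + Csum n G)%C.
Proof. induction n. simpl. normC. toC. ring. rewrite !Csum_S, IHn. toC. ring. Qed.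

Lemma Csum_mul_l n (a : C) (F : nat -> C) : (a * Csum n F)%C = Csum n (fun k => a * F k)%C.
Proof. induction n. simpl. normC. toC. ring. rewrite !Csum_S, <- IHn. toC. ring. Qed.

Lemma Csum_mul_r n (a : C) (F : nat -> C) : (Csum n F * a)%C = Csum n (fun k => F k * a)%C.
Proof. induction n. simpl. normC. toC. ring. rewrite !Csum_S, <- IHn. toC. ring. Qed.

Lemma Csum_swap n m (F : nat -> nat -> C) :
  Csum n (fun i => Csum m (fun j => F i j)) = Csum m (fun j => Csum n (fun i => F i j)).
Proof.
  induction n.
  - simpl. symmetry. induction m. reflexivity. rewrite Csum_S, IHm. simpl. normC. toC. ring.
  - rewrite Csum_S, IHn. rewrite <- Csum_add. apply Csum_ext'. intros k _. reflexivity.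
Qed.

Lemma Csum_delta_l n i (a : C) (G : nat -> C) : (i < n)%nat ->
  Csum n (fun k => (if Nat.eqb i k then a else CR 0) * G k)%C = (a * G i)%C.
Proof.
  induction n; intros Hi. lia. rewrite Csum_S.
  destruct (Nat.eq_dec i n) as [->|Hne].
  - rewrite Nat.eqb_refl. rewrite Csum_ext' with (G := fun _ => CR 0).
    2:{ intros k Hk. destruct (Nat.eqb_spec n k). lia. toC; ring. }
    assert (Hz : forall m, Csum m (fun _ : nat => CR 0) = CR 0).
    { induction m. reflexivity. rewrite Csum_S, IHm. toC; ring. }
    rewrite Hz. toC; ring.
  - rewrite IHn by lia. destruct (Nat.eqb_spec i n). lia. toC; ring.
Qed.

Lemma Csum_delta_r n j (a : C) (G : nat -> C) : (j < n)%nat ->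
  Csum n (fun k => G k * (if Nat.eqb k j then a else CR 0))%C = (G j * a)%C.
Proof.
  intros Hj. rewrite Csum_ext' with (G := (fun k => (if Nat.eqb j k then a else CR 0) * G k)%C).
  rewrite Csum_delta_l by auto. toC; ring.
  intros k _. rewrite Nat.eqb_sym. toC; ring.
Qed.

Lemma Cconj_Csum n (F : nat -> C) : Complex.Cconj (Csum n F) = Csum n (fun k => Complex.Cconj (F k)).
Proof. induction n. simpl. normC. apply injective_projections; simpl; ring.
  rewrite !Csum_S, Cplus_conj, IHn. reflexivity. Qed.

Lemma mmul_entry n A B i j : mmul n A B i j = Csum n (fun k => A i k * B k j)%C.
Proof. reflexivity. Qed.

Lemma meq_refl n A : meq n A A. Proof. intros i j _ _. reflexivity. Qed.
Lemma meq_sym n A B : meq n A B -> meq n B A. Proof. intros H i j Hi Hj. symmetry. auto. Qed.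
Lemma meq_trans n A B C' : meq n A B -> meq n B C' -> meq n A C'.
Proof. intros H1 H2 i j Hi Hj. rewrite H1, H2 by auto. reflexivity. Qed.

Add Parametric Relation n : Mat (meq n)
  reflexivity proved by (meq_refl n) symmetry proved by (meq_sym n) transitivity proved by (meq_trans n) as meq_rel.

Add Parametric Morphism n : (mmul n) with signature (meq n) ==> (meq n) ==> (meq n) as mmul_mor.
Proof. intros A A' HA B B' HB i j Hi Hj. rewrite !mmul_entry. apply Csum_ext'. intros k Hk. rewrite HA, HB by auto. reflexivity. Qed.
Add Parametric Morphism n : madd with signature (meq n) ==> (meq n) ==> (meq n) as madd_mor.
Proof. intros A A' HA B B' HB i j Hi Hj. unfold madd. rewrite HA, HB by auto. reflexivity. Qed.
Add Parametric Morphism n : msub with signature (meq n) ==> (meq n) ==> (meq n) as msub_mor.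
Proof. intros A A' HA B B' HB i j Hi Hj. unfold msub. rewrite HA, HB by auto. reflexivity. Qed.
Add Parametric Morphism n r : (mscale r) with signature (meq n) ==> (meq n) as mscale_mor.
Proof. intros A A' HA i j Hi Hj. unfold mscale. rewrite HA by auto. reflexivity. Qed.
Add Parametric Morphism n : madj with signature (meq n) ==> (meq n) as madj_mor.
Proof. intros A A' HA i j Hi Hj. unfold madj. rewrite HA by auto. reflexivity. Qed.
Add Parametric Morphism n : (hs_norm n) with signature (meq n) ==> eq as hs_mor.
Proof.
  intros A A' HA. unfold hs_norm. f_equal.
  assert (Hr : forall m (F G : nat -> R), (forall k, (k < m)%nat -> F k = G k) -> Rsum m F = Rsum m G).
  { induction m; intros F G H. reflexivity. simpl. rewrite (IHm F G) by (intros; apply H; lia). rewrite H by lia. reflexivity. }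
  apply Hr. intros i Hi. apply Hr. intros j Hj. rewrite HA by auto. reflexivity.
Qed.

Lemma mmul_assoc n A B C' : meq n (mmul n (mmul n A B) C') (mmul n A (mmul n B C')).
Proof.
  intros i j _ _. rewrite !mmul_entry.
  transitivity (Csum n (fun l => Csum n (fun k => A i k * B k l * C' l j)%C)).
  apply Csum_ext'. intros l _. rewrite mmul_entry, Csum_mul_r. reflexivity.
  rewrite Csum_swap. apply Csum_ext'. intros k _. rewrite mmul_entry, Csum_mul_l. apply Csum_ext'. intros l _. toC; ring.
Qed.

Lemma mmul_id_l n A : meq n (mmul n mid A) A.
Proof. intros i j Hi Hj. rewrite mmul_entry. unfold mid. normC. rewrite Csum_delta_l by auto. toC; ring. Qed.
Lemma mmul_id_r n A : meq n (mmul n A mid) A.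
Proof. intros i j Hi Hj. rewrite mmul_entry. unfold mid. normC. rewrite Csum_delta_r by auto. toC; ring. Qed.

Lemma mmul_add_l n A B C' : meq n (mmul n (madd A B) C') (madd (mmul n A C') (mmul n B C')).
Proof. intros i j _ _. unfold madd. rewrite !mmul_entry. normC. rewrite <- Csum_add. apply Csum_ext'. intros; toC; ring. Qed.
Lemma mmul_add_r n A B C' : meq n (mmul n A (madd B C')) (madd (mmul n A B) (mmul n A C')).
Proof. intros i j _ _. unfold madd. rewrite !mmul_entry. normC. rewrite <- Csum_add. apply Csum_ext'. intros; toC; ring. Qed.
Lemma mmul_sub_l n A B C' : meq n (mmul n (msub A B) C') (msub (mmul n A C') (mmul n B C')).
Proof. intros i j _ _. unfold msub. rewrite !mmul_entry. normC.
  transitivity (Csum n (fun k => A i k * C' k j + (- (1)) * (B i k * C' k j))%C).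
  apply Csum_ext'; intros; toC; ring. rewrite Csum_add, <- Csum_mul_l. toC; ring. Qed.
Lemma mmul_sub_r n A B C' : meq n (mmul n A (msub B C')) (msub (mmul n A B) (mmul n A C')).
Proof. intros i j _ _. unfold msub. rewrite !mmul_entry. normC.
  transitivity (Csum n (fun k => A i k * B k j + (- (1)) * (A i k * C' k j))%C).
  apply Csum_ext'; intros; toC; ring. rewrite Csum_add, <- Csum_mul_l. toC; ring. Qed.
Lemma mmul_scale_l n r A B : meq n (mmul n (mscale r A) B) (mscale r (mmul n A B)).
Proof. intros i j _ _. unfold mscale. rewrite !mmul_entry. normC. rewrite Csum_mul_l. apply Csum_ext'; intros; toC; ring. Qed.
Lemma mmul_scale_r n r A B : meq n (mmul n A (mscale r B)) (mscale r (mmul n A B)).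
Proof. intros i j _ _. unfold mscale. rewrite !mmul_entry. normC. rewrite Csum_mul_l. apply Csum_ext'; intros; toC; ring. Qed.

Definition tr n (M : Mat) : C := Csum n (fun i => M i i).

Lemma tr_meq n A B : meq n A B -> tr n A = tr n B.
Proof. intros H. unfold tr. apply Csum_ext'. intros k Hk. apply H; auto. Qed.

Add Parametric Morphism n : (tr n) with signature (meq n) ==> eq as tr_mor.
Proof. intros; apply tr_meq; auto. Qed.

Lemma tr_cyc n A B : tr n (mmul n A B) = tr n (mmul n B A).
Proof. unfold tr. rewrite (Csum_ext' n _ (fun i => Csum n (fun k => A i k * B k i)%C)) by (intros; reflexivity).
  rewrite Csum_swap. apply Csum_ext'. intros k _. rewrite mmul_entry. apply Csum_ext'. intros; toC; ring. Qed.

Lemma madj_mmul n A B : meq n (madj (mmul n A B)) (mmul n (madj B) (madj A)).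
Proof. intros i j _ _. unfold madj. rewrite !mmul_entry. normC. rewrite Cconj_Csum. apply Csum_ext'. intros k _.
  rewrite Cmult_conj. toC; ring. Qed.

Lemma madj_madj (A : Mat) : madj (madj A) = A.
Proof. apply functional_extensionality; intros i. apply functional_extensionality; intros j.
  unfold madj. normC. apply Cconj_conj. Qed.

Lemma RtoC_Rsum n (F : nat -> R) : CR (Rsum n F) = Csum n (fun i => CR (F i)).
Proof. induction n. reflexivity. simpl Rsum. rewrite Csum_S, <- IHn, RtoC_plus. reflexivity. Qed.

Lemma hs_tr n M : CR (Rsum n (fun i => Rsum n (fun j => Cnorm (M i j) ^ 2))) = tr n (mmul n M (madj M)).
Proof.
  rewrite RtoC_Rsum. unfold tr. apply Csum_ext'. intros i _. rewrite RtoC_Rsum, mmul_entry.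
  apply Csum_ext'. intros j _. unfold madj. normC. rewrite Cmod2_conj. reflexivity.
Qed.

Lemma unit_c1 n U Z : unitary n U -> meq n (mmul n (madj U) (mmul n U Z)) Z.
Proof. intros [H1 H2]. rewrite <- mmul_assoc. rewrite H1. apply mmul_id_l. Qed.
Lemma unit_c2 n U Z : unitary n U -> meq n (mmul n U (mmul n (madj U) Z)) Z.
Proof. intros [H1 H2]. rewrite <- mmul_assoc. rewrite H2. apply mmul_id_l. Qed.

Lemma hs_inv n U V N : unitary n U -> unitary n V ->
  hs_norm n (mmul n (mmul n U N) (madj V)) = hs_norm n N.
Proof.
  intros HU HV. set (M := mmul n (mmul n U N) (madj V)).
  assert (Htr : tr n (mmul n M (madj M)) = tr n (mmul n N (madj N))).
  { assert (E : meq n (mmul n M (madj M)) (mmul n U (mmul n (mmul n N (madj N)) (madj U)))).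
    { unfold M. rewrite madj_mmul, madj_mmul, madj_madj.
      rewrite !mmul_assoc. rewrite (unit_c1 n V) by auto. reflexivity. }
    rewrite E, tr_cyc, mmul_assoc. rewrite (proj1 HU). rewrite mmul_id_r. reflexivity. }
  unfold hs_norm. f_equal. rewrite <- !hs_tr in Htr. apply (f_equal fst) in Htr. simpl in Htr. exact Htr.
Qed.

Lemma Rsum_le n (F G : nat -> R) : (forall k, (k < n)%nat -> F k <= G k) -> Rsum n F <= Rsum n G.
Proof. induction n; intros H; simpl. lra. apply Rplus_le_compat. apply IHn; intros; apply H; lia. apply H; lia. Qed.

Lemma hs_mono n M N : (forall i j, (i < n)%nat -> (j < n)%nat -> Cmod (M i j) <= Cmod (N i j)) -> hs_norm n M <= hs_norm n N.
Proof.
  intros H. unfold hs_norm. apply sqrt_le_1_alt. apply Rsum_le. intros i Hi. apply Rsum_le. intros j Hj.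
  normC. apply pow_incr. split. apply Cmod_ge_0. auto.
Qed.

Definition Phi n (U W M : Mat) : Mat := mmul n (mmul n U M) W.

Lemma Phi_add n U W M N : meq n (madd (Phi n U W M) (Phi n U W N)) (Phi n U W (madd M N)).
Proof. unfold Phi. rewrite mmul_add_r, mmul_add_l. reflexivity. Qed.
Lemma Phi_sub n U W M N : meq n (msub (Phi n U W M) (Phi n U W N)) (Phi n U W (msub M N)).
Proof. unfold Phi. rewrite mmul_sub_r, mmul_sub_l. reflexivity. Qed.
Lemma Phi_scale n U W r M : meq n (mscale r (Phi n U W M)) (Phi n U W (mscale r M)).
Proof. unfold Phi. rewrite mmul_scale_r, mmul_scale_l. reflexivity. Qed.
Lemma Phi_L n U W P M : unitary n U -> meq n (mmul n (Phi n U (madj U) P) (Phi n U W M)) (Phi n U W (mmul n P M)).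
Proof. intros HU. unfold Phi. rewrite !mmul_assoc. rewrite (unit_c1 n U) by auto. reflexivity. Qed.
Lemma Phi_R n U V M Q : unitary n V -> meq n (mmul n (Phi n U (madj V) M) (Phi n V (madj V) Q)) (Phi n U (madj V) (mmul n M Q)).
Proof. intros HV. unfold Phi. rewrite !mmul_assoc. rewrite (unit_c1 n V) by auto. reflexivity. Qed.
Lemma Phi_id n U : unitary n U -> meq n mid (Phi n U (madj U) mid).
Proof. intros [H1 H2]. unfold Phi. rewrite mmul_id_r. symmetry. exact H2. Qed.
Lemma Phi_X n U V X : unitary n U -> unitary n V -> meq n X (Phi n U (madj V) (mmul n (mmul n (madj U) X) V)).
Proof. intros HU [HV1 HV2]. unfold Phi. rewrite !mmul_assoc. rewrite (unit_c2 n U) by auto. rewrite HV2. symmetry. apply mmul_id_r. Qed.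

Lemma diag_l n d Y i j : (i < n)%nat -> mmul n (mdiag d) Y i j = (d i * Y i j)%C.
Proof. intros Hi. rewrite mmul_entry. unfold mdiag. normC. exact (Csum_delta_l n i (d i) (fun k => Y k j) Hi). Qed.
Lemma diag_r n d Y i j : (j < n)%nat -> mmul n Y (mdiag d) i j = (Y i j * d j)%C.
Proof. intros Hj. rewrite mmul_entry. unfold mdiag. normC.
  rewrite Csum_ext' with (G := (fun k => Y i k * (if Nat.eqb k j then d j else CR 0))%C).
  apply Csum_delta_r; auto. intros k _. destruct (Nat.eqb_spec k j). subst; reflexivity. reflexivity. Qed.

Lemma Cnorm_RtoC x : Cnorm (Defs.RtoC x) = Rabs x.
Proof. normC. apply Cmod_R. Qed.

Lemma mindist_pos k lam : (forall j, (j < k)%nat -> Rabs (lam j) < 1) -> 0 < mindist k lam.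
Proof.
  induction k; intros H; simpl. lra. apply Rmin_glb_lt. apply IHk; intros; apply H; lia.
  unfold dist_circle. rewrite Cnorm_RtoC. specialize (H k ltac:(lia)). lra.
Qed.

Lemma mindist_le k lam i : (i < k)%nat -> mindist k lam <= 1 - Rabs (lam i).
Proof.
  induction k; intros H; simpl. lia. destruct (Nat.eq_dec i k) as [->|Hne].
  - unfold dist_circle. rewrite Cnorm_RtoC. apply Rmin_r.
  - eapply Rle_trans. apply Rmin_l. apply IHk. lia.
Qed.

Lemma fbound' (f : C -> C) x d : classH f -> Rabs x < 1 -> 0 < d <= 1 - Rabs x ->
  Cmod (f (Defs.RtoC x)) <= / d * (1 + sqrt (x ^ 2)).
Proof.
  intros Hf Hx Hd. rewrite <- pow2_abs, sqrt_pow2 by apply Rabs_pos.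
  pose proof (fbound f (Defs.RtoC x) Hf). rewrite RtoC_eq, Cmod_R in H. specialize (H Hx).
  eapply Rle_trans. exact H. unfold Rdiv. rewrite Rmult_comm. apply Rmult_le_compat_r.
  pose proof (Rabs_pos x); lra. apply Rinv_le_contravar; lra.
Qed.

Lemma mdiag_scale_id (s : R) (a : nat -> C) :
  mscale s (madd mid (mdiag a)) = mdiag (fun i => CR s * (CR 1 + a i))%C.
Proof.
  apply functional_extensionality; intros i. apply functional_extensionality; intros j.
  unfold mscale, madd, mid, mdiag. normC. destruct (Nat.eqb i j); toC; ring.
Qed.

Lemma Cmod_scal_nonneg (c : R) (y : C) : 0 <= c -> Cmod (CR c * y)%C = c * Cmod y.
Proof. intros H. rewrite Cmod_mult, Cmod_R, Rabs_pos_eq; auto. Qed.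

Theorem theorem3p3 (n : nat) (A B : Mat)
  (U : Mat) (lam : nat -> R) (V : Mat) (mu : nat -> R)
  (f g : Cx -> Cx) (X : Mat) :
  hermitian n A -> hermitian n B ->
  unitary n U -> meq n A (mmul n (mmul n U (mdiag (fun j => RtoC (lam j)))) (madj U)) ->
  unitary n V -> meq n B (mmul n (mmul n V (mdiag (fun j => RtoC (mu j)))) (madj V)) ->
  (forall j, (j < n)%nat -> Cnorm (RtoC (lam j)) < 1) ->
  (forall j, (j < n)%nat -> Cnorm (RtoC (mu j)) < 1) ->
  classH f -> classH g ->
  let fA := fcalc n U lam f in
  let gB := fcalc n V mu g in
  let absA := mabs n U lam in
  let absB := mabs n V mu in
  let dA_ := dA n lam in
  let dB_ := dA n mu in
  let rhs1 := hs_norm n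
      (madd (mscale (/ dA_) (madd X (mmul n absA X)))
            (mscale (/ dB_) (madd X (mmul n X absB)))) in
  let rhs2 := hs_norm n
      (madd (mmul n (mmul n (mscale (/ dA_) (madd mid absA)) X)
                    (mscale (/ dB_) (madd mid absB)))
            X) in
  hs_norm n (madd (mmul n fA X) (mmul n X gB)) <= rhs1 /\
  hs_norm n (msub (mmul n fA X) (mmul n X gB)) <= rhs1 /\
  hs_norm n (madd (mmul n (mmul n fA X) gB) X) <= rhs2 /\
  hs_norm n (msub (mmul n (mmul n fA X) gB) X) <= rhs2.
Proof.
  intros _ _ HU _ HV _ Hlam Hmu Hf Hg fA gB absA absB dA_ dB_ rhs1 rhs2.
  assert (Hl : forall j, (j < n)%nat -> Rabs (lam j) < 1) by (intros j Hj; rewrite <- Cnorm_RtoC; auto).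
  assert (Hm : forall j, (j < n)%nat -> Rabs (mu j) < 1) by (intros j Hj; rewrite <- Cnorm_RtoC; auto).
  assert (HdA : 0 < dA_) by (apply mindist_pos; auto).
  assert (HdB : 0 < dB_) by (apply mindist_pos; auto).
  set (sA := / dA_). set (sB := / dB_).
  assert (HsA : 0 < sA) by (apply Rinv_0_lt_compat; auto).
  assert (HsB : 0 < sB) by (apply Rinv_0_lt_compat; auto).
  set (fl := fun j => f (Defs.RtoC (lam j))). set (gm := fun j => g (Defs.RtoC (mu j))).
  set (al := fun j => sqrt (lam j ^ 2)). set (bm := fun j => sqrt (mu j ^ 2)).
  assert (Hal : forall j, 0 <= al j) by (intros; apply sqrt_pos).
  assert (Hbm : forall j, 0 <= bm j) by (intros; apply sqrt_pos).
  assert (Hfl : forall i, (i < n)%nat -> Cmod (fl i) <= sA * (1 + al i)).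
  { intros i Hi. apply fbound'; auto. split; auto. apply mindist_le; auto. }
  assert (Hgm : forall j, (j < n)%nat -> Cmod (gm j) <= sB * (1 + bm j)).
  { intros j Hj. apply fbound'; auto. split; auto. apply mindist_le; auto. }
  set (Df := mdiag fl). set (Dg := mdiag gm).
  set (Da := mdiag (fun j => Defs.RtoC (al j))). set (Db := mdiag (fun j => Defs.RtoC (bm j))).
  assert (EfA : fA = Phi n U (madj U) Df) by reflexivity.
  assert (EgB : gB = Phi n V (madj V) Dg) by reflexivity.
  assert (EaA : absA = Phi n U (madj U) Da) by reflexivity.
  assert (EaB : absB = Phi n V (madj V) Db) by reflexivity.
  set (Y := mmul n (mmul n (madj U) X) V).
  assert (HX : meq n X (Phi n U (madj V) Y)) by (apply Phi_X; auto).
  set (R1 := madd (mscale sA (madd Y (mmul n Da Y))) (mscale sB (madd Y (mmul n Y Db)))).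
  assert (ER1 : rhs1 = hs_norm n R1).
  { unfold rhs1. fold sA sB. rewrite EaA, EaB. rewrite HX.
    rewrite Phi_L, Phi_R by auto. rewrite !Phi_add, !Phi_scale, Phi_add. unfold Phi. apply hs_inv; auto. }
  set (P := mscale sA (madd mid Da)). set (Q := mscale sB (madd mid Db)).
  set (R2 := madd (mmul n (mmul n P Y) Q) Y).
  assert (ER2 : rhs2 = hs_norm n R2).
  { unfold rhs2. fold sA sB.
    assert (HP : meq n (mscale sA (madd mid absA)) (Phi n U (madj U) P)).
    { unfold P. rewrite <- Phi_scale, <- Phi_add, EaA, <- Phi_id by auto. reflexivity. }
    assert (HQ : meq n (mscale sB (madd mid absB)) (Phi n V (madj V) Q)).
    { unfold Q. rewrite <- Phi_scale, <- Phi_add, EaB, <- Phi_id by auto. reflexivity. }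
    rewrite HP, HQ, HX. rewrite Phi_L, Phi_R by auto. rewrite Phi_add. unfold Phi. apply hs_inv; auto. }
  assert (EP : P = mdiag (fun i => CR sA * (CR 1 + CR (al i)))%C) by (unfold P, Da; rewrite mdiag_scale_id; reflexivity).
  assert (EQ : Q = mdiag (fun i => CR sB * (CR 1 + CR (bm i)))%C) by (unfold Q, Db; rewrite mdiag_scale_id; reflexivity).
  assert (HR1 : forall i j, (i < n)%nat -> (j < n)%nat ->
     Cmod (R1 i j) = (sA * (1 + al i) + sB * (1 + bm j)) * Cmod (Y i j)).
  { intros i j Hi Hj. unfold R1, madd, mscale, Da, Db. rewrite diag_l, diag_r by auto. normC.
    replace (CR sA * (Y i j + CR (al i) * Y i j) + CR sB * (Y i j + Y i j * CR (bm j)))%C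
      with (CR (sA * (1 + al i) + sB * (1 + bm j)) * Y i j)%C
      by (rewrite RtoC_plus, !RtoC_mult, !RtoC_plus; toC; ring).
    apply Cmod_scal_nonneg. specialize (Hal i). specialize (Hbm j). nra. }
  assert (HR2 : forall i j, (i < n)%nat -> (j < n)%nat ->
     Cmod (R2 i j) = (sA * (1 + al i) * (sB * (1 + bm j)) + 1) * Cmod (Y i j)).
  { intros i j Hi Hj. unfold R2, madd. rewrite EP, EQ. rewrite diag_r, diag_l by auto. normC.
    replace (CR sA * (CR 1 + CR (al i)) * Y i j * (CR sB * (CR 1 + CR (bm j))) + Y i j)%C
      with (CR (sA * (1 + al i) * (sB * (1 + bm j)) + 1) * Y i j)%C
      by (rewrite RtoC_plus, !RtoC_mult, !RtoC_plus; toC; ring).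
    apply Cmod_scal_nonneg. specialize (Hal i). specialize (Hbm j).
    assert (0 <= sA * (1 + al i) * (sB * (1 + bm j))) by (repeat apply Rmult_le_pos; lra). lra. }
  assert (E1 : forall op, op = madd \/ op = msub ->
     hs_norm n (op (mmul n fA X) (mmul n X gB)) = hs_norm n (op (mmul n Df Y) (mmul n Y Dg))).
  { intros op [-> | ->]; rewrite EfA, EgB, HX; rewrite Phi_L, Phi_R by auto;
      [rewrite Phi_add | rewrite Phi_sub]; unfold Phi; apply hs_inv; auto. }
  assert (E2 : forall op, op = madd \/ op = msub ->
     hs_norm n (op (mmul n (mmul n fA X) gB) X) = hs_norm n (op (mmul n (mmul n Df Y) Dg) Y)).
  { intros op [-> | ->]; rewrite EfA, EgB, HX; rewrite Phi_L, Phi_R by auto;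
      [rewrite Phi_add | rewrite Phi_sub]; unfold Phi; apply hs_inv; auto. }
  assert (B1 : forall i j (s : C), (i < n)%nat -> (j < n)%nat -> Cmod s = 1 ->
     Cmod (fl i * Y i j + s * (Y i j * gm j))%C <= Cmod (R1 i j)).
  { intros i j s Hi Hj Hs. rewrite HR1 by auto. eapply Rle_trans. apply Cmod_triangle.
    rewrite !Cmod_mult, Hs. specialize (Hfl i Hi). specialize (Hgm j Hj). pose proof (Cmod_ge_0 (Y i j)).
    pose proof (Cmod_ge_0 (gm j)).
    assert (Cmod (fl i) * Cmod (Y i j) <= sA * (1 + al i) * Cmod (Y i j)) by (apply Rmult_le_compat_r; lra).
    assert (Cmod (Y i j) * Cmod (gm j) <= Cmod (Y i j) * (sB * (1 + bm j))) by (apply Rmult_le_compat_l; lra).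
    nra. }
  assert (B2 : forall i j (s : C), (i < n)%nat -> (j < n)%nat -> Cmod s = 1 ->
     Cmod (fl i * Y i j * gm j + s * Y i j)%C <= Cmod (R2 i j)).
  { intros i j s Hi Hj Hs. rewrite HR2 by auto. eapply Rle_trans. apply Cmod_triangle.
    rewrite !Cmod_mult, Hs. specialize (Hfl i Hi). specialize (Hgm j Hj). pose proof (Cmod_ge_0 (Y i j)).
    pose proof (Cmod_ge_0 (gm j)). pose proof (Cmod_ge_0 (fl i)).
    assert (Cmod (fl i) * Cmod (gm j) <= sA * (1 + al i) * (sB * (1 + bm j))).
    { apply Rmult_le_compat; auto. }
    assert (Cmod (fl i) * Cmod (Y i j) * Cmod (gm j) <= sA * (1 + al i) * (sB * (1 + bm j)) * Cmod (Y i j)).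
    { replace (Cmod (fl i) * Cmod (Y i j) * Cmod (gm j)) with (Cmod (fl i) * Cmod (gm j) * Cmod (Y i j)) by ring.
      apply Rmult_le_compat_r; auto. }
    nra. }
  assert (Hm1 : Cmod (CR 1) = 1) by (rewrite Cmod_R; apply Rabs_R1).
  assert (Hm2 : Cmod (CR (-1)) = 1) by (rewrite Cmod_R; unfold Rabs; destruct Rcase_abs; lra).
  split; [|split; [|split]].
  - rewrite (E1 madd) by auto. rewrite ER1. apply hs_mono. intros i j Hi Hj. unfold madd.
    unfold Df, Dg. rewrite diag_l, diag_r by auto. normC.
    replace (fl i * Y i j + Y i j * gm j)%C with (fl i * Y i j + CR 1 * (Y i j * gm j))%C by (toC; ring). auto.
  - rewrite (E1 msub) by auto. rewrite ER1. apply hs_mono. intros i j Hi Hj. unfold msub.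
    unfold Df, Dg. rewrite diag_l, diag_r by auto. normC.
    replace (fl i * Y i j - Y i j * gm j)%C with (fl i * Y i j + CR (-1) * (Y i j * gm j))%C by (toC; ring). auto.
  - rewrite (E2 madd) by auto. rewrite ER2. apply hs_mono. intros i j Hi Hj. unfold madd.
    unfold Df, Dg. rewrite diag_r, diag_l by auto. normC.
    replace (fl i * Y i j * gm j + Y i j)%C with (fl i * Y i j * gm j + CR 1 * Y i j)%C by (toC; ring). auto.
  - rewrite (E2 msub) by auto. rewrite ER2. apply hs_mono. intros i j Hi Hj. unfold msub.
    unfold Df, Dg. rewrite diag_r, diag_l by auto. normC.
    replace (fl i * Y i j * gm j - Y i j)%C with (fl i * Y i j * gm j + CR (-1) * Y i j)%C by (toC; ring). auto.
Qed.
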